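(* Let $t \in \mathbb{N}_0$ and $b \in \mathbb{N}$ be such that $\Phi_b(x)$ divides \begin{align*} R_t(x) = {}& x^{8t+15} + x^{8t+14} + x^{8t+11} - x^{8t+10} - x^{8t+8} + 2x^{6t+9} - x^{4t+15} - x^{4t+11} - x^{4t+9} + 2x^{4t+8} \\ & - 2x^{4t+7} + x^{4t+6} + x^{4t+4} + x^{4t} - 2x^{2t+6} + x^7 + x^5 - x^4 - x - 1. \end{align*} Then $4 \nmid b$.
   Context: $\Phi_b(x) = \prod_\zeta (x-\zeta)$, where $\zeta$ ranges over the primitive $b$-th roots of unity, is the $b$-th cyclotomic polynomial. *)

(* Defs.v *)
From mathcomp Require Import all_boot all_order all_algebra all_field.
Set Implicit Arguments. Unset Strict Implicit. Unset Printing Implicit Defensive.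
Import GRing.Theory.
Local Open Scope ring_scope.

Definition Rpoly (t : nat) : {poly int} :=
  'X^(8*t+15) + 'X^(8*t+14) + 'X^(8*t+11) - 'X^(8*t+10) - 'X^(8*t+8)
  + 2%:P * 'X^(6*t+9) - 'X^(4*t+15) - 'X^(4*t+11) - 'X^(4*t+9)
  + 2%:P * 'X^(4*t+8) - 2%:P * 'X^(4*t+7) + 'X^(4*t+6) + 'X^(4*t+4)
  + 'X^(4*t) - 2%:P * 'X^(2*t+6) + 'X^7 + 'X^5 - 'X^4 - 'X - 1.

(* Main.v *)
Require Import Defs.
From mathcomp Require Import all_boot all_order all_algebra all_field.
From mathcomp Require Import ring zify.
Import GRing.Theory Num.Theory.
Local Open Scope ring_scope.

Local Notation pZtoC := (map_poly (intr : int -> algC)).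

Definition E0 (u w : algC) : algC := u^+4*(w^+7 - w^+5 - w^+4) + u^+2*(2*w^+4+w^+3+w^+2+1) - 2*u*w^+3 - w^+2 - 1.
Definition G0 (u w : algC) : algC := - u^+4*(w^+7 + w^+5) - 2*u^+3*w^+4 + u^+2*(w^+7+w^+5+w^+4+2*w^+3) + 1 - w^+2 - w^+3.

Definition Pexp (u y : algC) : algC :=
  u^+4*y^+15 + u^+4*y^+14 + u^+4*y^+11 - u^+4*y^+10 - u^+4*y^+8 + 2*u^+3*y^+9
  - u^+2*y^+15 - u^+2*y^+11 - u^+2*y^+9 + 2*u^+2*y^+8 - 2*u^+2*y^+7 + u^+2*y^+6
  + u^+2*y^+4 + u^+2 - 2*u*y^+6 + y^+7 + y^+5 - y^+4 - y - 1.

Lemma pw (y : algC) (t k m : nat) : y ^+ (k.*2 * t + m) = ((y^+2)^+t)^+k * y^+m.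
Proof. by rewrite exprD -mul2n -mulnA exprM mulnC exprM. Qed.

Lemma pw0 (y : algC) (t k : nat) : y ^+ (k.*2 * t) = ((y^+2)^+t)^+k.
Proof. by rewrite -mul2n -mulnA exprM mulnC exprM. Qed.

Lemma evalR t (y : algC) : (pZtoC (Rpoly t)).[y] = Pexp ((y^+2)^+t) y.
Proof.
rewrite /Rpoly !rmorphD !rmorphN !rmorphXn rmorph1 !rmorphM /=.
rewrite ?map_polyXn ?map_polyX ?rmorphD ?rmorph1 ?map_polyC ?map_polyXn ?map_polyX.

rewrite !hornerE.
rewrite (pw y t 4 15 : y^+(8*t+15) = _) (pw y t 4 14 : y^+(8*t+14) = _).
rewrite (pw y t 4 11 : y^+(8*t+11) = _) (pw y t 4 10 : y^+(8*t+10) = _).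
rewrite (pw y t 4 8 : y^+(8*t+8) = _) (pw y t 3 9 : y^+(6*t+9) = _).
rewrite (pw y t 2 15 : y^+(4*t+15) = _) (pw y t 2 11 : y^+(4*t+11) = _).
rewrite (pw y t 2 9 : y^+(4*t+9) = _) (pw y t 2 8 : y^+(4*t+8) = _).
rewrite (pw y t 2 7 : y^+(4*t+7) = _) (pw y t 2 6 : y^+(4*t+6) = _).
rewrite (pw y t 2 4 : y^+(4*t+4) = _) (pw0 y t 2 : y^+(4*t) = _).
rewrite (pw y t 1 6 : y^+(2*t+6) = _).
rewrite /Pexp; ring.
Qed.

Lemma conj_root (q : {poly int}) n (y : algC) j :
  n.-primitive_root y -> coprime j n -> root (pZtoC q) y -> root (pZtoC q) (y ^+ j).
Proof.
move=> py cj ry.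
have py' : n.-primitive_root (y ^+ j) by rewrite prim_root_exp_coprime.
have [p [Dp _] Hp] := minCpolyP y.
have eqm : pZtoC q = map_poly (ratr : rat -> algC) (map_poly (intr : int -> rat) q).
  rewrite -map_poly_comp; apply: eq_map_poly => a /=; by rewrite rmorph_int.
have dq : p %| map_poly (intr : int -> rat) q by rewrite -Hp -eqm.
have mm : minCpoly (y ^+ j) = minCpoly y.
  by rewrite (minCpoly_cyclotomic py) (minCpoly_cyclotomic py') -!(Cintr_Cyclotomic py) -(Cintr_Cyclotomic py').
apply: (root_dvdp _ (root_minCpoly (y ^+ j))).
by rewrite mm Dp eqm dvdp_map.
Qed.

Lemma prim_inv n (y : algC) : n.-primitive_root y -> n.-primitive_root y^-1.
Proof.
move=> py; have n0 := prim_order_gt0 py.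
have y0 : y != 0 by rewrite (prim_root_eq0 py) -lt0n.
have -> : y^-1 = y ^+ n.-1.
  apply: (mulfI y0); rewrite mulfV // -exprS prednK //; by rewrite prim_expr_order.
by rewrite prim_root_exp_coprime // coprimePn.
Qed.

Lemma rootR t b (y : algC) : 'Phi_b %| Rpoly t -> b.-primitive_root y -> Pexp ((y^+2)^+t) y = 0.
Proof.
move=> hd py; rewrite -evalR.
have [r Dr] := dvdpP_int hd; rewrite zprimitive_monic ?Cyclotomic_monic // in Dr.
rewrite Dr rmorphM /= hornerM (Cintr_Cyclotomic py).
have : root (cyclotomic y b) y by rewrite root_cyclotomic.
by move/eqP=> ->; rewrite mul0r.
Qed.

Lemma evenE t b (y : algC) : 'Phi_b %| Rpoly t -> b.-primitive_root y ->
  b.-primitive_root (- y) -> E0 ((y^+2)^+t) (y^+2) = 0.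
Proof.
move=> hd py pny.
have h1 := rootR _ _ _ hd py; have h2 := rootR _ _ _ hd pny; rewrite sqrrN in h2.
have : 2 * E0 ((y^+2)^+t) (y^+2) = Pexp ((y^+2)^+t) y + Pexp ((y^+2)^+t) (- y).
  rewrite /E0 /Pexp; ring.
rewrite h1 h2 addr0 => /eqP; rewrite mulf_eq0 pnatr_eq0 orFb => /eqP //.
Qed.

Lemma pos_step (x : algC) (k : nat) : 0 < x -> 0 < x * 1000 + k%:R.
Proof. move=> hx; apply: ltr_wpDr; first by rewrite ler0n. by rewrite mulr_gt0 // ltr0n. Qed.

Lemma termE (c : int) k (x : algC) : (pZtoC (c%:P * 'X^k)).[x] = c%:~R * x^+k.
Proof. by rewrite rmorphM /= map_polyC map_polyXn hornerM hornerC hornerXn. Qed.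
Lemma sumE (s : seq (int * nat)) (x : algC) :
  (pZtoC (\sum_(p <- s) p.1%:P * 'X^(p.2))).[x] = \sum_(p <- s) p.1%:~R * x^+(p.2).
Proof. rewrite rmorph_sum /= horner_sum; apply: eq_bigr => -[c k] _; exact: termE. Qed.
Definition Qexpr (w : algC) : algC := (1 + 2 * w^+1 - w^+2 - 10 * w^+3 - 25 * w^+4 - 58 * w^+5 - 114 * w^+6 - 182 * w^+7 - 255 * w^+8 - 302 * w^+9 - 230 * w^+10 - 38 * w^+11 + 136 * w^+12 + 160 * w^+13 + 117 * w^+14 + 222 * w^+15 + 483 * w^+16 + 640 * w^+17 + 483 * w^+18 + 222 * w^+19 + 117 * w^+20 + 160 * w^+21 + 136 * w^+22 - 38 * w^+23 - 230 * w^+24 - 302 * w^+25 - 255 * w^+26 - 182 * w^+27 - 114 * w^+28 - 58 * w^+29 - 25 * w^+30 - 10 * w^+31 - w^+32 + 2 * w^+33 + w^+34).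

Definition Qpoly : {poly int} := \sum_(p <- [:: ((1 : int), 0%N); ((2 : int), 1%N); ((- (1 : int)), 2%N); ((- (10 : int)), 3%N); ((- (25 : int)), 4%N); ((- (58 : int)), 5%N); ((- (114 : int)), 6%N); ((- (182 : int)), 7%N); ((- (255 : int)), 8%N); ((- (302 : int)), 9%N); ((- (230 : int)), 10%N); ((- (38 : int)), 11%N); ((136 : int), 12%N); ((160 : int), 13%N); ((117 : int), 14%N); ((222 : int), 15%N); ((483 : int), 16%N); ((640 : int), 17%N); ((483 : int), 18%N); ((222 : int), 19%N); ((117 : int), 20%N); ((160 : int), 21%N); ((136 : int), 22%N); ((- (38 : int)), 23%N); ((- (230 : int)), 24%N); ((- (302 : int)), 25%N); ((- (255 : int)), 26%N); ((- (182 : int)), 27%N); ((- (114 : int)), 28%N); ((- (58 : int)), 29%N); ((- (25 : int)), 30%N); ((- (10 : int)), 31%N); ((- (1 : int)), 32%N); ((2 : int), 33%N); ((1 : int), 34%N)]) p.1%:P * 'X^(p.2).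

Lemma res_cert (u w : algC) :
  ((2 * w^+19 - 10 * w^+21 - 24 * w^+22 - 14 * w^+23 - 6 * w^+24 + 10 * w^+25 + 4 * w^+26 + 12 * w^+27 - 10 * w^+28 + 32 * w^+29 + 2 * w^+30 + 14 * w^+31 - 8 * w^+32 + 6 * w^+33 + 20 * w^+34 + 28 * w^+35 + 28 * w^+36 - 10 * w^+37 - 2 * w^+38 - 20 * w^+39 - 14 * w^+40 - 8 * w^+41 - 10 * w^+42 - 4 * w^+43 - 2 * w^+45) * u^+3 + (w^+15 - 3 * w^+17 - 3 * w^+18 - 8 * w^+19 - 40 * w^+20 - 66 * w^+21 - 21 * w^+22 + 31 * w^+23 + 36 * w^+24 - w^+25 + 24 * w^+26 + 47 * w^+27 + 84 * w^+28 + 21 * w^+29 - 40 * w^+30 - 19 * w^+31 + 35 * w^+32 + 51 * w^+33 + 12 * w^+34 - 7 * w^+35 - 37 * w^+36 - 27 * w^+37 - 17 * w^+38 - 17 * w^+39 - 3 * w^+40 + w^+41 - 3 * w^+42 + w^+44) * u^+2 + (2 * w^+14 - 8 * w^+16 - 20 * w^+17 - 12 * w^+18 + 4 * w^+19 + 22 * w^+20 - 10 * w^+21 - 28 * w^+22 + 80 * w^+24 + 60 * w^+25 + 52 * w^+26 - 36 * w^+27 - 10 * w^+28 - 4 * w^+29 + 34 * w^+30 - 26 * w^+31 - 58 * w^+32 - 68 * w^+33 - 76 * w^+34 - 18 * w^+35 - 4 * w^+36 + 18 * w^+37 + 22 * w^+38 + 32 * w^+39 + 14 * w^+40 + 12 *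 w^+41 + 12 * w^+42 + 4 * w^+43 + 2 * w^+45) * u^+1 + (- 2 * w^+13 + 9 * w^+15 + 14 * w^+16 + 10 * w^+17 + 24 * w^+18 + 21 * w^+19 - 39 * w^+20 - 78 * w^+21 - 9 * w^+22 + 54 * w^+23 + 42 * w^+24 - 91 * w^+25 - 87 * w^+26 + 3 * w^+27 + 122 * w^+28 + 55 * w^+29 - 27 * w^+30 - 35 * w^+31 + 24 * w^+33 - 8 * w^+34 - 7 * w^+35 - 4 * w^+36 + 8 * w^+37 - w^+39 - 2 * w^+40 - 2 * w^+41 - w^+42 - w^+44) * u^+0) * E0 u w + ((- 2 * w^+18 - 2 * w^+19 + 12 * w^+20 + 38 * w^+21 + 26 * w^+22 - 28 * w^+23 - 54 * w^+24 + 32 * w^+26 + 8 * w^+27 - 50 * w^+28 - 30 * w^+29 + 24 * w^+30 + 56 * w^+31 - 20 * w^+32 - 68 * w^+33 - 36 * w^+34 + 18 * w^+35 + 38 * w^+36 + 22 * w^+37 + 12 * w^+38 + 2 * w^+39 + 8 * w^+40 - 4 * w^+41 - 8 * w^+42 - 2 * w^+45) * u^+3 + (- w^+14 - w^+15 + 4 * w^+16 + 12 * w^+17 + 11 * w^+18 + 9 * w^+19 + 16 * w^+20 + 18 * w^+21 - 10 * w^+22 - 43 * w^+23 - 46 * w^+24 - 13 * w^+25 - 5 * w^+26 - 19 * w^+27 - 16 * w^+28 + 37 * w^+29 + 47 * w^+30 + 8 * w^+31 - 37 * w^+32 - 18 * w^+33 + 31 * w^+34 + 37 * w^+35 + w^+36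 - 24 * w^+37 - 8 * w^+38 + w^+39 + w^+40 - w^+42 + w^+44) * u^+2 + (2 * w^+14 - 8 * w^+16 - 18 * w^+17 - 10 * w^+18 - 14 * w^+19 + 2 * w^+20 + 18 * w^+21 + 24 * w^+22 - 68 * w^+23 - 62 * w^+24 - 2 * w^+25 + 110 * w^+26 + 44 * w^+27 - 32 * w^+28 - 60 * w^+29 + 42 * w^+30 + 122 * w^+31 + 68 * w^+32 + 16 * w^+33 - 14 * w^+34 - 2 * w^+35 - 30 * w^+36 - 32 * w^+37 - 28 * w^+38 - 20 * w^+39 - 8 * w^+40 - 4 * w^+41 - 4 * w^+42) * u^+1 + (w^+10 - 3 * w^+12 - 7 * w^+13 - 9 * w^+14 - 21 * w^+15 - 25 * w^+16 - 23 * w^+17 - 13 * w^+18 + 9 * w^+19 + 68 * w^+20 + 59 * w^+21 + 11 * w^+22 - 47 * w^+23 + 36 * w^+24 + 75 * w^+25 + 100 * w^+26 - 81 * w^+27 - 104 * w^+28 - 27 * w^+29 + 66 * w^+30 + 37 * w^+31 - 55 * w^+32 - 58 * w^+33 - 44 * w^+34 + 24 * w^+35 + 5 * w^+36 + 7 * w^+37 + 20 * w^+38 + 7 * w^+39 + 2 * w^+40 + 6 * w^+41) * u^+0) * G0 u w = w^+10 * (w - 1)^+2 * Qexpr w.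
Proof. rewrite /E0 /G0 /Qexpr. ring. Qed.

Lemma cert1 (w : algC) :
  ((((((((59 * 1000 + 311%:R) * 1000 + 300%:R) * 1000 + 334%:R) * 1000 + 236%:R) * 1000 + 936%:R) * 1000 + 979%:R) * 1000 + 240%:R) - (((((((242 * 1000 + 777%:R) * 1000 + 596%:R) * 1000 + 908%:R) * 1000 + 216%:R) * 1000 + 503%:R) * 1000 + 694%:R) * 1000 + 653%:R) * w^+1 + (((((((544 * 1000 + 866%:R) * 1000 + 494%:R) * 1000 + 150%:R) * 1000 + 669%:R) * 1000 + 944%:R) * 1000 + 368%:R) * 1000 + 546%:R) * w^+2 - (((((((950 * 1000 + 190%:R) * 1000 + 525%:R) * 1000 + 966%:R) * 1000 + 966%:R) * 1000 + 802%:R) * 1000 + 862%:R) * 1000 + 4%:R) * w^+3 + ((((((((1 * 1000 + 500%:R) * 1000 + 254%:R) * 1000 + 85%:R) * 1000 + 358%:R) * 1000 + 361%:R) * 1000 + 937%:R) * 1000 + 627%:R) * 1000 + 24%:R) * w^+4 - ((((((((2 * 1000 + 8%:R) * 1000 + 464%:R) * 1000 + 232%:R) * 1000 + 772%:R) * 1000 + 316%:R) * 1000 + 11%:R) * 1000 + 50%:R) * 1000 + 231%:R) * w^+5 + ((((((((2 * 1000 + 317%:R) * 1000 + 327%:R) * 1000 + 262%:R) * 1000 + 426%:R) * 1000 + 528%:R) * 1000 + 141%:R) * 1000 + 664%:R) * 1000 + 582%:R) * w^+6 - ((((((((2 * 1000 + 615%:R) * 1000 + 660%:R) * 1000 + 495%:R)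 * 1000 + 860%:R) * 1000 + 763%:R) * 1000 + 747%:R) * 1000 + 317%:R) * 1000 + 207%:R) * w^+7 + ((((((((2 * 1000 + 912%:R) * 1000 + 946%:R) * 1000 + 835%:R) * 1000 + 411%:R) * 1000 + 258%:R) * 1000 + 315%:R) * 1000 + 769%:R) * 1000 + 652%:R) * w^+8 - ((((((((2 * 1000 + 132%:R) * 1000 + 65%:R) * 1000 + 43%:R) * 1000 + 820%:R) * 1000 + 676%:R) * 1000 + 912%:R) * 1000 + 701%:R) * 1000 + 798%:R) * w^+9 - (((((((179 * 1000 + 261%:R) * 1000 + 151%:R) * 1000 + 806%:R) * 1000 + 900%:R) * 1000 + 459%:R) * 1000 + 282%:R) * 1000 + 438%:R) * w^+10 + ((((((((2 * 1000 + 672%:R) * 1000 + 34%:R) * 1000 + 777%:R) * 1000 + 930%:R) * 1000 + 211%:R) * 1000 + 816%:R) * 1000 + 79%:R) * 1000 + 218%:R) * w^+11 - ((((((((3 * 1000 + 459%:R) * 1000 + 140%:R) * 1000 + 417%:R) * 1000 + 410%:R) * 1000 + 282%:R) * 1000 + 264%:R) * 1000 + 237%:R) * 1000 + 216%:R) * w^+12 + ((((((((2 * 1000 + 870%:R) * 1000 + 984%:R) * 1000 + 191%:R) * 1000 + 94%:R) * 1000 + 781%:R) * 1000 + 196%:R) * 1000 + 524%:R) * 1000 + 134%:R) * w^+13 - ((((((((3 * 1000 + 479%:R) * 1000 + 729%:R) * 1000 + 937%:R) * 1000 + 923%:R) * 1000 + 498%:R) * 1000 + 466%:R) * 1000 +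 40%:R) * 1000 + 724%:R) * w^+14 + ((((((((5 * 1000 + 855%:R) * 1000 + 774%:R) * 1000 + 786%:R) * 1000 + 279%:R) * 1000 + 664%:R) * 1000 + 239%:R) * 1000 + 763%:R) * 1000 + 985%:R) * w^+15 - ((((((((7 * 1000 + 422%:R) * 1000 + 120%:R) * 1000 + 220%:R) * 1000 + 979%:R) * 1000 + 249%:R) * 1000 + 20%:R) * 1000 + 412%:R) * 1000 + 910%:R) * w^+16 + ((((((((5 * 1000 + 630%:R) * 1000 + 954%:R) * 1000 + 855%:R) * 1000 + 736%:R) * 1000 + 121%:R) * 1000 + 478%:R) * 1000 + 499%:R) * 1000 + 196%:R) * w^+17 - ((((((((2 * 1000 + 476%:R) * 1000 + 563%:R) * 1000 + 462%:R) * 1000 + 92%:R) * 1000 + 727%:R) * 1000 + 244%:R) * 1000 + 759%:R) * 1000 + 150%:R) * w^+18 + (((((((847 * 1000 + 823%:R) * 1000 + 140%:R) * 1000 + 304%:R) * 1000 + 211%:R) * 1000 + 199%:R) * 1000 + 871%:R) * 1000 + 295%:R) * w^+19 - (((((((943 * 1000 + 78%:R) * 1000 + 551%:R) * 1000 + 243%:R) * 1000 + 991%:R) * 1000 + 541%:R) * 1000 + 27%:R) * 1000 + 84%:R) * w^+20 + (((((((607 * 1000 + 774%:R) * 1000 + 688%:R) * 1000 + 986%:R) * 1000 + 601%:R) * 1000 + 907%:R) * 1000 + 351%:R) * 1000 + 964%:R) * w^+21 + ((((((((1 * 1000 + 139%:R) * 1000 + 409%:R) * 1000 + 160%:R) *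 1000 + 677%:R) * 1000 + 325%:R) * 1000 + 467%:R) * 1000 + 869%:R) * 1000 + 444%:R) * w^+22 - ((((((((2 * 1000 + 971%:R) * 1000 + 739%:R) * 1000 + 789%:R) * 1000 + 37%:R) * 1000 + 253%:R) * 1000 + 750%:R) * 1000 + 504%:R) * 1000 + 442%:R) * w^+23 + ((((((((3 * 1000 + 529%:R) * 1000 + 683%:R) * 1000 + 613%:R) * 1000 + 424%:R) * 1000 + 371%:R) * 1000 + 976%:R) * 1000 + 673%:R) * 1000 + 142%:R) * w^+24 - ((((((((2 * 1000 + 883%:R) * 1000 + 486%:R) * 1000 + 220%:R) * 1000 + 819%:R) * 1000 + 538%:R) * 1000 + 961%:R) * 1000 + 197%:R) * 1000 + 108%:R) * w^+25 + ((((((((2 * 1000 + 16%:R) * 1000 + 365%:R) * 1000 + 470%:R) * 1000 + 594%:R) * 1000 + 230%:R) * 1000 + 145%:R) * 1000 + 924%:R) * 1000 + 372%:R) * w^+26 - ((((((((1 * 1000 + 238%:R) * 1000 + 861%:R) * 1000 + 402%:R) * 1000 + 337%:R) * 1000 + 448%:R) * 1000 + 872%:R) * 1000 + 290%:R) * 1000 + 997%:R) * w^+27 + (((((((621 * 1000 + 302%:R) * 1000 + 198%:R) * 1000 + 668%:R) * 1000 + 566%:R) * 1000 + 116%:R) * 1000 + 775%:R) * 1000 + 482%:R) * w^+28 - (((((((264 * 1000 + 270%:R) * 1000 + 714%:R) * 1000 + 333%:R) * 1000 + 514%:R) * 1000 + 845%:R) * 1000 + 403%:R) * 1000 + 21%:R)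 * w^+29 + (((((((104 * 1000 + 399%:R) * 1000 + 967%:R) * 1000 + 550%:R) * 1000 + 431%:R) * 1000 + 398%:R) * 1000 + 953%:R) * 1000 + 524%:R) * w^+30 - (((((((9 * 1000 + 669%:R) * 1000 + 930%:R) * 1000 + 424%:R) * 1000 + 943%:R) * 1000 + 864%:R) * 1000 + 328%:R) * 1000 + 134%:R) * w^+31 - (((((((21 * 1000 + 265%:R) * 1000 + 26%:R) * 1000 + 675%:R) * 1000 + 135%:R) * 1000 + 917%:R) * 1000 + 574%:R) * 1000 + 314%:R) * w^+32 + (((((((10 * 1000 + 632%:R) * 1000 + 513%:R) * 1000 + 337%:R) * 1000 + 567%:R) * 1000 + 958%:R) * 1000 + 787%:R) * 1000 + 157%:R) * w^+33) * Qexpr w + ((((((((59 * 1000 + 311%:R) * 1000 + 300%:R) * 1000 + 334%:R) * 1000 + 236%:R) * 1000 + 936%:R) * 1000 + 979%:R) * 1000 + 240%:R) + (((((((242 * 1000 + 777%:R) * 1000 + 596%:R) * 1000 + 908%:R) * 1000 + 216%:R) * 1000 + 503%:R) * 1000 + 694%:R) * 1000 + 653%:R) * w^+1 + (((((((544 * 1000 + 866%:R) * 1000 + 494%:R) * 1000 + 150%:R) * 1000 + 669%:R) * 1000 + 944%:R) * 1000 + 368%:R) * 1000 + 546%:R) * w^+2 + (((((((950 * 1000 + 190%:R) * 1000 + 525%:R) * 1000 + 966%:R) * 1000 + 966%:R) * 1000 + 802%:R) * 1000 + 862%:R) * 1000 + 4%:R) * w^+3 + ((((((((1 * 1000 + 500%:R)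 * 1000 + 254%:R) * 1000 + 85%:R) * 1000 + 358%:R) * 1000 + 361%:R) * 1000 + 937%:R) * 1000 + 627%:R) * 1000 + 24%:R) * w^+4 + ((((((((2 * 1000 + 8%:R) * 1000 + 464%:R) * 1000 + 232%:R) * 1000 + 772%:R) * 1000 + 316%:R) * 1000 + 11%:R) * 1000 + 50%:R) * 1000 + 231%:R) * w^+5 + ((((((((2 * 1000 + 317%:R) * 1000 + 327%:R) * 1000 + 262%:R) * 1000 + 426%:R) * 1000 + 528%:R) * 1000 + 141%:R) * 1000 + 664%:R) * 1000 + 582%:R) * w^+6 + ((((((((2 * 1000 + 615%:R) * 1000 + 660%:R) * 1000 + 495%:R) * 1000 + 860%:R) * 1000 + 763%:R) * 1000 + 747%:R) * 1000 + 317%:R) * 1000 + 207%:R) * w^+7 + ((((((((2 * 1000 + 912%:R) * 1000 + 946%:R) * 1000 + 835%:R) * 1000 + 411%:R) * 1000 + 258%:R) * 1000 + 315%:R) * 1000 + 769%:R) * 1000 + 652%:R) * w^+8 + ((((((((2 * 1000 + 132%:R) * 1000 + 65%:R) * 1000 + 43%:R) * 1000 + 820%:R) * 1000 + 676%:R) * 1000 + 912%:R) * 1000 + 701%:R) * 1000 + 798%:R) * w^+9 - (((((((179 * 1000 + 261%:R) * 1000 + 151%:R) * 1000 + 806%:R) * 1000 + 900%:R) * 1000 + 459%:R) * 1000 + 282%:R) * 1000 + 438%:R) * w^+10 - ((((((((2 * 1000 + 672%:R) * 1000 + 34%:R) * 1000 + 777%:R) * 1000 + 930%:R) * 1000 +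 211%:R) * 1000 + 816%:R) * 1000 + 79%:R) * 1000 + 218%:R) * w^+11 - ((((((((3 * 1000 + 459%:R) * 1000 + 140%:R) * 1000 + 417%:R) * 1000 + 410%:R) * 1000 + 282%:R) * 1000 + 264%:R) * 1000 + 237%:R) * 1000 + 216%:R) * w^+12 - ((((((((2 * 1000 + 870%:R) * 1000 + 984%:R) * 1000 + 191%:R) * 1000 + 94%:R) * 1000 + 781%:R) * 1000 + 196%:R) * 1000 + 524%:R) * 1000 + 134%:R) * w^+13 - ((((((((3 * 1000 + 479%:R) * 1000 + 729%:R) * 1000 + 937%:R) * 1000 + 923%:R) * 1000 + 498%:R) * 1000 + 466%:R) * 1000 + 40%:R) * 1000 + 724%:R) * w^+14 - ((((((((5 * 1000 + 855%:R) * 1000 + 774%:R) * 1000 + 786%:R) * 1000 + 279%:R) * 1000 + 664%:R) * 1000 + 239%:R) * 1000 + 763%:R) * 1000 + 985%:R) * w^+15 - ((((((((7 * 1000 + 422%:R) * 1000 + 120%:R) * 1000 + 220%:R) * 1000 + 979%:R) * 1000 + 249%:R) * 1000 + 20%:R) * 1000 + 412%:R) * 1000 + 910%:R) * w^+16 - ((((((((5 * 1000 + 630%:R) * 1000 + 954%:R) * 1000 + 855%:R) * 1000 + 736%:R) * 1000 + 121%:R) * 1000 + 478%:R) * 1000 + 499%:R) * 1000 + 196%:R) * w^+17 - ((((((((2 * 1000 + 476%:R) * 1000 + 563%:R) * 1000 + 462%:R) * 1000 + 92%:R) * 1000 + 727%:R) * 1000 + 244%:R) * 1000 + 759%:R)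 * 1000 + 150%:R) * w^+18 - (((((((847 * 1000 + 823%:R) * 1000 + 140%:R) * 1000 + 304%:R) * 1000 + 211%:R) * 1000 + 199%:R) * 1000 + 871%:R) * 1000 + 295%:R) * w^+19 - (((((((943 * 1000 + 78%:R) * 1000 + 551%:R) * 1000 + 243%:R) * 1000 + 991%:R) * 1000 + 541%:R) * 1000 + 27%:R) * 1000 + 84%:R) * w^+20 - (((((((607 * 1000 + 774%:R) * 1000 + 688%:R) * 1000 + 986%:R) * 1000 + 601%:R) * 1000 + 907%:R) * 1000 + 351%:R) * 1000 + 964%:R) * w^+21 + ((((((((1 * 1000 + 139%:R) * 1000 + 409%:R) * 1000 + 160%:R) * 1000 + 677%:R) * 1000 + 325%:R) * 1000 + 467%:R) * 1000 + 869%:R) * 1000 + 444%:R) * w^+22 + ((((((((2 * 1000 + 971%:R) * 1000 + 739%:R) * 1000 + 789%:R) * 1000 + 37%:R) * 1000 + 253%:R) * 1000 + 750%:R) * 1000 + 504%:R) * 1000 + 442%:R) * w^+23 + ((((((((3 * 1000 + 529%:R) * 1000 + 683%:R) * 1000 + 613%:R) * 1000 + 424%:R) * 1000 + 371%:R) * 1000 + 976%:R) * 1000 + 673%:R) * 1000 + 142%:R) * w^+24 + ((((((((2 * 1000 + 883%:R) * 1000 + 486%:R) * 1000 + 220%:R) * 1000 + 819%:R) * 1000 + 538%:R) * 1000 + 961%:R) * 1000 + 197%:R) * 1000 + 108%:R) * w^+25 + ((((((((2 * 1000 + 16%:R) * 1000 + 365%:R) * 1000 + 470%:R) * 1000 +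 594%:R) * 1000 + 230%:R) * 1000 + 145%:R) * 1000 + 924%:R) * 1000 + 372%:R) * w^+26 + ((((((((1 * 1000 + 238%:R) * 1000 + 861%:R) * 1000 + 402%:R) * 1000 + 337%:R) * 1000 + 448%:R) * 1000 + 872%:R) * 1000 + 290%:R) * 1000 + 997%:R) * w^+27 + (((((((621 * 1000 + 302%:R) * 1000 + 198%:R) * 1000 + 668%:R) * 1000 + 566%:R) * 1000 + 116%:R) * 1000 + 775%:R) * 1000 + 482%:R) * w^+28 + (((((((264 * 1000 + 270%:R) * 1000 + 714%:R) * 1000 + 333%:R) * 1000 + 514%:R) * 1000 + 845%:R) * 1000 + 403%:R) * 1000 + 21%:R) * w^+29 + (((((((104 * 1000 + 399%:R) * 1000 + 967%:R) * 1000 + 550%:R) * 1000 + 431%:R) * 1000 + 398%:R) * 1000 + 953%:R) * 1000 + 524%:R) * w^+30 + (((((((9 * 1000 + 669%:R) * 1000 + 930%:R) * 1000 + 424%:R) * 1000 + 943%:R) * 1000 + 864%:R) * 1000 + 328%:R) * 1000 + 134%:R) * w^+31 - (((((((21 * 1000 + 265%:R) * 1000 + 26%:R) * 1000 + 675%:R) * 1000 + 135%:R) * 1000 + 917%:R) * 1000 + 574%:R) * 1000 + 314%:R) * w^+32 - (((((((10 * 1000 + 632%:R) * 1000 + 513%:R) * 1000 + 337%:R) * 1000 + 567%:R) * 1000 + 958%:R) * 1000 + 787%:R) * 1000 + 157%:R) * w^+33) * Qexpr (- w) = (((((((118 * 1000 + 622%:R) * 1000 + 600%:R) * 1000 + 668%:R)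 * 1000 + 473%:R) * 1000 + 873%:R) * 1000 + 958%:R) * 1000 + 480%:R).
Proof. rewrite /Qexpr. ring. Qed.

Lemma cert2 (w : algC) :
  ((((((((((((((((((((((((475 * 1000 + 257%:R) * 1000 + 678%:R) * 1000 + 60%:R) * 1000 + 836%:R) * 1000 + 287%:R) * 1000 + 322%:R) * 1000 + 39%:R) * 1000 + 261%:R) * 1000 + 746%:R) * 1000 + 793%:R) * 1000 + 675%:R) * 1000 + 438%:R) * 1000 + 846%:R) * 1000 + 156%:R) * 1000 + 629%:R) * 1000 + 729%:R) * 1000 + 292%:R) * 1000 + 137%:R) * 1000 + 609%:R) * 1000 + 113%:R) * 1000 + 923%:R) * 1000 + 479%:R) * 1000 + 623%:R) - (((((((((((((((((((((((407 * 1000 + 456%:R) * 1000 + 846%:R) * 1000 + 998%:R) * 1000 + 110%:R) * 1000 + 207%:R) * 1000 + 874%:R) * 1000 + 14%:R) * 1000 + 223%:R) * 1000 + 581%:R) * 1000 + 475%:R) * 1000 + 297%:R) * 1000 + 998%:R) * 1000 + 719%:R) * 1000 + 643%:R) * 1000 + 1%:R) * 1000 + 143%:R) * 1000 + 342%:R) * 1000 + 637%:R) * 1000 + 791%:R) * 1000 + 504%:R) * 1000 + 47%:R) * 1000 + 849%:R) * 1000 + 898%:R) * w^+1 - (((((((((((((((((((((((902 * 1000 + 586%:R) * 1000 + 480%:R) * 1000 + 738%:R) * 1000 + 2%:R) * 1000 + 855%:R) * 1000 + 672%:R) * 1000 + 389%:R) * 1000 + 573%:R) * 1000 + 563%:R)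 * 1000 + 974%:R) * 1000 + 363%:R) * 1000 + 7%:R) * 1000 + 989%:R) * 1000 + 261%:R) * 1000 + 404%:R) * 1000 + 693%:R) * 1000 + 49%:R) * 1000 + 588%:R) * 1000 + 821%:R) * 1000 + 374%:R) * 1000 + 222%:R) * 1000 + 977%:R) * 1000 + 970%:R) * w^+2 + ((((((((((((((((((((((((1 * 1000 + 195%:R) * 1000 + 241%:R) * 1000 + 607%:R) * 1000 + 407%:R) * 1000 + 677%:R) * 1000 + 108%:R) * 1000 + 932%:R) * 1000 + 347%:R) * 1000 + 36%:R) * 1000 + 276%:R) * 1000 + 253%:R) * 1000 + 566%:R) * 1000 + 169%:R) * 1000 + 694%:R) * 1000 + 572%:R) * 1000 + 42%:R) * 1000 + 479%:R) * 1000 + 184%:R) * 1000 + 55%:R) * 1000 + 807%:R) * 1000 + 741%:R) * 1000 + 32%:R) * 1000 + 464%:R) * 1000 + 86%:R) * w^+3 - (((((((((((((((((((((((920 * 1000 + 984%:R) * 1000 + 78%:R) * 1000 + 253%:R) * 1000 + 542%:R) * 1000 + 558%:R) * 1000 + 907%:R) * 1000 + 226%:R) * 1000 + 350%:R) * 1000 + 245%:R) * 1000 + 998%:R) * 1000 + 636%:R) * 1000 + 853%:R) * 1000 + 741%:R) * 1000 + 872%:R) * 1000 + 692%:R) * 1000 + 836%:R) * 1000 + 331%:R) * 1000 + 398%:R) * 1000 + 218%:R) * 1000 + 393%:R) * 1000 + 578%:R) * 1000 + 84%:R) * 1000 + 831%:R) * w^+4 + (((((((((((((((((((((((81 * 1000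 + 724%:R) * 1000 + 183%:R) * 1000 + 490%:R) * 1000 + 851%:R) * 1000 + 739%:R) * 1000 + 859%:R) * 1000 + 59%:R) * 1000 + 769%:R) * 1000 + 845%:R) * 1000 + 729%:R) * 1000 + 280%:R) * 1000 + 21%:R) * 1000 + 279%:R) * 1000 + 284%:R) * 1000 + 128%:R) * 1000 + 195%:R) * 1000 + 343%:R) * 1000 + 967%:R) * 1000 + 278%:R) * 1000 + 784%:R) * 1000 + 406%:R) * 1000 + 219%:R) * 1000 + 808%:R) * w^+5 + ((((((((((((((((((((((((3 * 1000 + 385%:R) * 1000 + 767%:R) * 1000 + 380%:R) * 1000 + 896%:R) * 1000 + 608%:R) * 1000 + 975%:R) * 1000 + 80%:R) * 1000 + 897%:R) * 1000 + 821%:R) * 1000 + 108%:R) * 1000 + 758%:R) * 1000 + 758%:R) * 1000 + 589%:R) * 1000 + 757%:R) * 1000 + 198%:R) * 1000 + 929%:R) * 1000 + 182%:R) * 1000 + 122%:R) * 1000 + 206%:R) * 1000 + 505%:R) * 1000 + 964%:R) * 1000 + 169%:R) * 1000 + 182%:R) * 1000 + 384%:R) * w^+6 - ((((((((((((((((((((((((1 * 1000 + 929%:R) * 1000 + 210%:R) * 1000 + 278%:R) * 1000 + 513%:R) * 1000 + 263%:R) * 1000 + 363%:R) * 1000 + 758%:R) * 1000 + 842%:R) * 1000 + 994%:R) * 1000 + 210%:R) * 1000 + 533%:R) * 1000 + 427%:R) * 1000 + 899%:R) * 1000 + 312%:R) * 1000 + 42%:R) * 1000 + 992%:R) * 1000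 + 108%:R) * 1000 + 987%:R) * 1000 + 501%:R) * 1000 + 874%:R) * 1000 + 73%:R) * 1000 + 731%:R) * 1000 + 958%:R) * 1000 + 236%:R) * w^+7 - ((((((((((((((((((((((((7 * 1000 + 388%:R) * 1000 + 749%:R) * 1000 + 874%:R) * 1000 + 852%:R) * 1000 + 241%:R) * 1000 + 368%:R) * 1000 + 67%:R) * 1000 + 530%:R) * 1000 + 520%:R) * 1000 + 16%:R) * 1000 + 24%:R) * 1000 + 594%:R) * 1000 + 481%:R) * 1000 + 292%:R) * 1000 + 491%:R) * 1000 + 843%:R) * 1000 + 205%:R) * 1000 + 693%:R) * 1000 + 40%:R) * 1000 + 76%:R) * 1000 + 604%:R) * 1000 + 282%:R) * 1000 + 290%:R) * 1000 + 237%:R) * w^+8 + ((((((((((((((((((((((((4 * 1000 + 495%:R) * 1000 + 932%:R) * 1000 + 147%:R) * 1000 + 258%:R) * 1000 + 722%:R) * 1000 + 782%:R) * 1000 + 960%:R) * 1000 + 192%:R) * 1000 + 646%:R) * 1000 + 461%:R) * 1000 + 532%:R) * 1000 + 437%:R) * 1000 + 647%:R) * 1000 + 605%:R) * 1000 + 589%:R) * 1000 + 282%:R) * 1000 + 613%:R) * 1000 + 430%:R) * 1000 + 690%:R) * 1000 + 978%:R) * 1000 + 432%:R) * 1000 + 911%:R) * 1000 + 182%:R) * 1000 + 22%:R) * w^+9 + ((((((((((((((((((((((((18 * 1000 + 744%:R) * 1000 + 960%:R) * 1000 + 995%:R) * 1000 + 379%:R) * 1000 + 760%:R) * 1000 +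 291%:R) * 1000 + 493%:R) * 1000 + 508%:R) * 1000 + 272%:R) * 1000 + 449%:R) * 1000 + 496%:R) * 1000 + 66%:R) * 1000 + 928%:R) * 1000 + 811%:R) * 1000 + 100%:R) * 1000 + 162%:R) * 1000 + 97%:R) * 1000 + 445%:R) * 1000 + 195%:R) * 1000 + 616%:R) * 1000 + 544%:R) * 1000 + 464%:R) * 1000 + 124%:R) * 1000 + 921%:R) * w^+10 - ((((((((((((((((((((((((13 * 1000 + 449%:R) * 1000 + 129%:R) * 1000 + 585%:R) * 1000 + 357%:R) * 1000 + 934%:R) * 1000 + 260%:R) * 1000 + 93%:R) * 1000 + 945%:R) * 1000 + 326%:R) * 1000 + 63%:R) * 1000 + 519%:R) * 1000 + 645%:R) * 1000 + 14%:R) * 1000 + 371%:R) * 1000 + 15%:R) * 1000 + 154%:R) * 1000 + 59%:R) * 1000 + 957%:R) * 1000 + 632%:R) * 1000 + 429%:R) * 1000 + 270%:R) * 1000 + 204%:R) * 1000 + 535%:R) * 1000 + 990%:R) * w^+11 - ((((((((((((((((((((((((35 * 1000 + 447%:R) * 1000 + 762%:R) * 1000 + 443%:R) * 1000 + 220%:R) * 1000 + 245%:R) * 1000 + 962%:R) * 1000 + 817%:R) * 1000 + 551%:R) * 1000 + 173%:R) * 1000 + 654%:R) * 1000 + 113%:R) * 1000 + 177%:R) * 1000 + 461%:R) * 1000 + 745%:R) * 1000 + 447%:R) * 1000 + 976%:R) * 1000 + 108%:R) * 1000 + 149%:R) * 1000 + 537%:R) * 1000 + 847%:R) * 1000 +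 946%:R) * 1000 + 335%:R) * 1000 + 489%:R) * 1000 + 697%:R) * w^+12 + ((((((((((((((((((((((((28 * 1000 + 453%:R) * 1000 + 706%:R) * 1000 + 632%:R) * 1000 + 797%:R) * 1000 + 139%:R) * 1000 + 772%:R) * 1000 + 330%:R) * 1000 + 845%:R) * 1000 + 863%:R) * 1000 + 50%:R) * 1000 + 958%:R) * 1000 + 645%:R) * 1000 + 290%:R) * 1000 + 32%:R) * 1000 + 702%:R) * 1000 + 318%:R) * 1000 + 905%:R) * 1000 + 830%:R) * 1000 + 751%:R) * 1000 + 25%:R) * 1000 + 5%:R) * 1000 + 431%:R) * 1000 + 723%:R) * 1000 + 608%:R) * w^+13 + ((((((((((((((((((((((((52 * 1000 + 116%:R) * 1000 + 125%:R) * 1000 + 120%:R) * 1000 + 58%:R) * 1000 + 644%:R) * 1000 + 388%:R) * 1000 + 365%:R) * 1000 + 453%:R) * 1000 + 750%:R) * 1000 + 535%:R) * 1000 + 378%:R) * 1000 + 429%:R) * 1000 + 850%:R) * 1000 + 375%:R) * 1000 + 40%:R) * 1000 + 393%:R) * 1000 + 997%:R) * 1000 + 784%:R) * 1000 + 114%:R) * 1000 + 87%:R) * 1000 + 460%:R) * 1000 + 593%:R) * 1000 + 304%:R) * 1000 + 298%:R) * w^+14 - ((((((((((((((((((((((((43 * 1000 + 346%:R) * 1000 + 629%:R) * 1000 + 459%:R) * 1000 + 286%:R) * 1000 + 504%:R) * 1000 + 357%:R) * 1000 + 296%:R) * 1000 + 135%:R) * 1000 + 124%:R) * 1000 + 131%:R)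 * 1000 + 90%:R) * 1000 + 312%:R) * 1000 + 390%:R) * 1000 + 133%:R) * 1000 + 328%:R) * 1000 + 280%:R) * 1000 + 595%:R) * 1000 + 210%:R) * 1000 + 111%:R) * 1000 + 444%:R) * 1000 + 746%:R) * 1000 + 353%:R) * 1000 + 475%:R) * 1000 + 434%:R) * w^+15 - ((((((((((((((((((((((((74 * 1000 + 734%:R) * 1000 + 255%:R) * 1000 + 380%:R) * 1000 + 387%:R) * 1000 + 996%:R) * 1000 + 756%:R) * 1000 + 44%:R) * 1000 + 797%:R) * 1000 + 644%:R) * 1000 + 910%:R) * 1000 + 64%:R) * 1000 + 668%:R) * 1000 + 831%:R) * 1000 + 410%:R) * 1000 + 329%:R) * 1000 + 358%:R) * 1000 + 155%:R) * 1000 + 538%:R) * 1000 + 195%:R) * 1000 + 606%:R) * 1000 + 865%:R) * 1000 + 647%:R) * 1000 + 667%:R) * 1000 + 834%:R) * w^+16 + ((((((((((((((((((((((((69 * 1000 + 124%:R) * 1000 + 783%:R) * 1000 + 4%:R) * 1000 + 175%:R) * 1000 + 916%:R) * 1000 + 714%:R) * 1000 + 990%:R) * 1000 + 573%:R) * 1000 + 398%:R) * 1000 + 629%:R) * 1000 + 643%:R) * 1000 + 450%:R) * 1000 + 424%:R) * 1000 + 294%:R) * 1000 + 537%:R) * 1000 + 569%:R) * 1000 + 881%:R) * 1000 + 482%:R) * 1000 + 172%:R) * 1000 + 315%:R) * 1000 + 930%:R) * 1000 + 853%:R) * 1000 + 457%:R) * 1000 + 632%:R) * w^+17 + ((((((((((((((((((((((((74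 * 1000 + 284%:R) * 1000 + 235%:R) * 1000 + 154%:R) * 1000 + 747%:R) * 1000 + 512%:R) * 1000 + 518%:R) * 1000 + 808%:R) * 1000 + 136%:R) * 1000 + 469%:R) * 1000 + 682%:R) * 1000 + 396%:R) * 1000 + 432%:R) * 1000 + 44%:R) * 1000 + 312%:R) * 1000 + 655%:R) * 1000 + 773%:R) * 1000 + 491%:R) * 1000 + 510%:R) * 1000 + 683%:R) * 1000 + 811%:R) * 1000 + 218%:R) * 1000 + 388%:R) * 1000 + 857%:R) * 1000 + 388%:R) * w^+18 - ((((((((((((((((((((((((75 * 1000 + 605%:R) * 1000 + 192%:R) * 1000 + 774%:R) * 1000 + 394%:R) * 1000 + 872%:R) * 1000 + 782%:R) * 1000 + 106%:R) * 1000 + 92%:R) * 1000 + 344%:R) * 1000 + 970%:R) * 1000 + 715%:R) * 1000 + 879%:R) * 1000 + 71%:R) * 1000 + 34%:R) * 1000 + 942%:R) * 1000 + 952%:R) * 1000 + 210%:R) * 1000 + 157%:R) * 1000 + 786%:R) * 1000 + 344%:R) * 1000 + 383%:R) * 1000 + 620%:R) * 1000 + 928%:R) * 1000 + 590%:R) * w^+19 - ((((((((((((((((((((((((34 * 1000 + 807%:R) * 1000 + 2%:R) * 1000 + 345%:R) * 1000 + 380%:R) * 1000 + 454%:R) * 1000 + 157%:R) * 1000 + 510%:R) * 1000 + 447%:R) * 1000 + 519%:R) * 1000 + 488%:R) * 1000 + 564%:R) * 1000 + 259%:R) * 1000 + 366%:R) * 1000 + 470%:R) * 1000 + 375%:R)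 * 1000 + 869%:R) * 1000 + 236%:R) * 1000 + 794%:R) * 1000 + 824%:R) * 1000 + 170%:R) * 1000 + 617%:R) * 1000 + 137%:R) * 1000 + 148%:R) * 1000 + 904%:R) * w^+20 + ((((((((((((((((((((((((41 * 1000 + 539%:R) * 1000 + 836%:R) * 1000 + 179%:R) * 1000 + 253%:R) * 1000 + 114%:R) * 1000 + 179%:R) * 1000 + 440%:R) * 1000 + 958%:R) * 1000 + 41%:R) * 1000 + 106%:R) * 1000 + 85%:R) * 1000 + 713%:R) * 1000 + 612%:R) * 1000 + 850%:R) * 1000 + 428%:R) * 1000 + 650%:R) * 1000 + 727%:R) * 1000 + 35%:R) * 1000 + 572%:R) * 1000 + 238%:R) * 1000 + 262%:R) * 1000 + 59%:R) * 1000 + 702%:R) * 1000 + 692%:R) * w^+21 - ((((((((((((((((((((((((23 * 1000 + 53%:R) * 1000 + 765%:R) * 1000 + 198%:R) * 1000 + 895%:R) * 1000 + 552%:R) * 1000 + 950%:R) * 1000 + 404%:R) * 1000 + 723%:R) * 1000 + 32%:R) * 1000 + 134%:R) * 1000 + 392%:R) * 1000 + 57%:R) * 1000 + 897%:R) * 1000 + 620%:R) * 1000 + 556%:R) * 1000 + 316%:R) * 1000 + 440%:R) * 1000 + 675%:R) * 1000 + 924%:R) * 1000 + 45%:R) * 1000 + 356%:R) * 1000 + 284%:R) * 1000 + 875%:R) * 1000 + 517%:R) * w^+22 + ((((((((((((((((((((((((17 * 1000 + 767%:R) * 1000 + 280%:R) * 1000 + 894%:R) * 1000 + 352%:R) *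 1000 + 719%:R) * 1000 + 88%:R) * 1000 + 410%:R) * 1000 + 308%:R) * 1000 + 333%:R) * 1000 + 88%:R) * 1000 + 672%:R) * 1000 + 213%:R) * 1000 + 621%:R) * 1000 + 816%:R) * 1000 + 196%:R) * 1000 + 842%:R) * 1000 + 915%:R) * 1000 + 914%:R) * 1000 + 746%:R) * 1000 + 720%:R) * 1000 + 404%:R) * 1000 + 608%:R) * 1000 + 839%:R) * 1000 + 588%:R) * w^+23 + ((((((((((((((((((((((((44 * 1000 + 944%:R) * 1000 + 683%:R) * 1000 + 770%:R) * 1000 + 231%:R) * 1000 + 769%:R) * 1000 + 857%:R) * 1000 + 372%:R) * 1000 + 390%:R) * 1000 + 499%:R) * 1000 + 878%:R) * 1000 + 385%:R) * 1000 + 216%:R) * 1000 + 71%:R) * 1000 + 451%:R) * 1000 + 879%:R) * 1000 + 786%:R) * 1000 + 345%:R) * 1000 + 884%:R) * 1000 + 759%:R) * 1000 + 60%:R) * 1000 + 506%:R) * 1000 + 458%:R) * 1000 + 550%:R) * 1000 + 798%:R) * w^+24 - ((((((((((((((((((((((((43 * 1000 + 664%:R) * 1000 + 659%:R) * 1000 + 512%:R) * 1000 + 233%:R) * 1000 + 197%:R) * 1000 + 52%:R) * 1000 + 267%:R) * 1000 + 555%:R) * 1000 + 982%:R) * 1000 + 612%:R) * 1000 + 579%:R) * 1000 + 741%:R) * 1000 + 706%:R) * 1000 + 451%:R) * 1000 + 302%:R) * 1000 + 56%:R) * 1000 + 262%:R) * 1000 + 65%:R) * 1000 + 770%:R) *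 1000 + 179%:R) * 1000 + 835%:R) * 1000 + 641%:R) * 1000 + 965%:R) * 1000 + 456%:R) * w^+25 - ((((((((((((((((((((((((24 * 1000 + 712%:R) * 1000 + 64%:R) * 1000 + 950%:R) * 1000 + 850%:R) * 1000 + 880%:R) * 1000 + 294%:R) * 1000 + 137%:R) * 1000 + 816%:R) * 1000 + 321%:R) * 1000 + 767%:R) * 1000 + 939%:R) * 1000 + 355%:R) * 1000 + 948%:R) * 1000 + 700%:R) * 1000 + 220%:R) * 1000 + 975%:R) * 1000 + 246%:R) * 1000 + 913%:R) * 1000 + 559%:R) * 1000 + 255%:R) * 1000 + 494%:R) * 1000 + 861%:R) * 1000 + 737%:R) * 1000 + 486%:R) * w^+26 + ((((((((((((((((((((((((19 * 1000 + 654%:R) * 1000 + 310%:R) * 1000 + 766%:R) * 1000 + 162%:R) * 1000 + 996%:R) * 1000 + 431%:R) * 1000 + 6%:R) * 1000 + 945%:R) * 1000 + 829%:R) * 1000 + 713%:R) * 1000 + 210%:R) * 1000 + 918%:R) * 1000 + 241%:R) * 1000 + 871%:R) * 1000 + 550%:R) * 1000 + 883%:R) * 1000 + 268%:R) * 1000 + 613%:R) * 1000 + 772%:R) * 1000 + 807%:R) * 1000 + 510%:R) * 1000 + 94%:R) * 1000 + 133%:R) * 1000 + 220%:R) * w^+27 + ((((((((((((((((((((((((24 * 1000 + 542%:R) * 1000 + 86%:R) * 1000 + 480%:R) * 1000 + 548%:R) * 1000 + 298%:R) * 1000 + 89%:R) * 1000 + 538%:R) * 1000 + 259%:R) * 1000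 + 594%:R) * 1000 + 854%:R) * 1000 + 420%:R) * 1000 + 914%:R) * 1000 + 627%:R) * 1000 + 515%:R) * 1000 + 849%:R) * 1000 + 235%:R) * 1000 + 555%:R) * 1000 + 301%:R) * 1000 + 102%:R) * 1000 + 527%:R) * 1000 + 897%:R) * 1000 + 699%:R) * 1000 + 473%:R) * 1000 + 274%:R) * w^+28 - ((((((((((((((((((((((((10 * 1000 + 660%:R) * 1000 + 327%:R) * 1000 + 501%:R) * 1000 + 825%:R) * 1000 + 837%:R) * 1000 + 532%:R) * 1000 + 743%:R) * 1000 + 125%:R) * 1000 + 640%:R) * 1000 + 229%:R) * 1000 + 628%:R) * 1000 + 155%:R) * 1000 + 939%:R) * 1000 + 787%:R) * 1000 + 688%:R) * 1000 + 683%:R) * 1000 + 681%:R) * 1000 + 720%:R) * 1000 + 737%:R) * 1000 + 188%:R) * 1000 + 47%:R) * 1000 + 950%:R) * 1000 + 436%:R) * 1000 + 360%:R) * w^+29 - ((((((((((((((((((((((((82 * 1000 + 889%:R) * 1000 + 791%:R) * 1000 + 724%:R) * 1000 + 425%:R) * 1000 + 535%:R) * 1000 + 891%:R) * 1000 + 210%:R) * 1000 + 781%:R) * 1000 + 185%:R) * 1000 + 509%:R) * 1000 + 590%:R) * 1000 + 57%:R) * 1000 + 478%:R) * 1000 + 475%:R) * 1000 + 412%:R) * 1000 + 753%:R) * 1000 + 902%:R) * 1000 + 500%:R) * 1000 + 682%:R) * 1000 + 755%:R) * 1000 + 13%:R) * 1000 + 422%:R) * 1000 + 593%:R) * 1000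 + 234%:R) * w^+30 + ((((((((((((((((((((((((62 * 1000 + 442%:R) * 1000 + 353%:R) * 1000 + 218%:R) * 1000 + 473%:R) * 1000 + 420%:R) * 1000 + 583%:R) * 1000 + 408%:R) * 1000 + 222%:R) * 1000 + 846%:R) * 1000 + 466%:R) * 1000 + 703%:R) * 1000 + 971%:R) * 1000 + 908%:R) * 1000 + 572%:R) * 1000 + 681%:R) * 1000 + 135%:R) * 1000 + 939%:R) * 1000 + 17%:R) * 1000 + 22%:R) * 1000 + 582%:R) * 1000 + 393%:R) * 1000 + 266%:R) * 1000 + 40%:R) * 1000 + 222%:R) * w^+31 + ((((((((((((((((((((((((161 * 1000 + 163%:R) * 1000 + 382%:R) * 1000 + 477%:R) * 1000 + 736%:R) * 1000 + 549%:R) * 1000 + 472%:R) * 1000 + 422%:R) * 1000 + 859%:R) * 1000 + 385%:R) * 1000 + 843%:R) * 1000 + 744%:R) * 1000 + 927%:R) * 1000 + 849%:R) * 1000 + 368%:R) * 1000 + 341%:R) * 1000 + 849%:R) * 1000 + 941%:R) * 1000 + 880%:R) * 1000 + 910%:R) * 1000 + 725%:R) * 1000 + 384%:R) * 1000 + 711%:R) * 1000 + 630%:R) * 1000 + 218%:R) * w^+32 - ((((((((((((((((((((((((149 * 1000 + 661%:R) * 1000 + 264%:R) * 1000 + 291%:R) * 1000 + 323%:R) * 1000 + 352%:R) * 1000 + 149%:R) * 1000 + 221%:R) * 1000 + 887%:R) * 1000 + 681%:R) * 1000 + 714%:R) * 1000 + 892%:R) * 1000 + 190%:R) * 1000 +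 203%:R) * 1000 + 167%:R) * 1000 + 1%:R) * 1000 + 4%:R) * 1000 + 554%:R) * 1000 + 216%:R) * 1000 + 704%:R) * 1000 + 238%:R) * 1000 + 348%:R) * 1000 + 318%:R) * 1000 + 364%:R) * 1000 + 522%:R) * w^+33 - ((((((((((((((((((((((((149 * 1000 + 390%:R) * 1000 + 620%:R) * 1000 + 558%:R) * 1000 + 203%:R) * 1000 + 683%:R) * 1000 + 630%:R) * 1000 + 806%:R) * 1000 + 960%:R) * 1000 + 794%:R) * 1000 + 399%:R) * 1000 + 437%:R) * 1000 + 759%:R) * 1000 + 796%:R) * 1000 + 680%:R) * 1000 + 320%:R) * 1000 + 345%:R) * 1000 + 160%:R) * 1000 + 127%:R) * 1000 + 763%:R) * 1000 + 661%:R) * 1000 + 407%:R) * 1000 + 287%:R) * 1000 + 592%:R) * 1000 + 521%:R) * w^+34 + ((((((((((((((((((((((((148 * 1000 + 448%:R) * 1000 + 582%:R) * 1000 + 710%:R) * 1000 + 663%:R) * 1000 + 995%:R) * 1000 + 167%:R) * 1000 + 958%:R) * 1000 + 277%:R) * 1000 + 996%:R) * 1000 + 698%:R) * 1000 + 485%:R) * 1000 + 973%:R) * 1000 + 384%:R) * 1000 + 180%:R) * 1000 + 627%:R) * 1000 + 218%:R) * 1000 + 123%:R) * 1000 + 638%:R) * 1000 + 772%:R) * 1000 + 72%:R) * 1000 + 710%:R) * 1000 + 910%:R) * 1000 + 412%:R) * 1000 + 548%:R) * w^+35 + ((((((((((((((((((((((((74 * 1000 + 562%:R) * 1000 + 884%:R)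 * 1000 + 172%:R) * 1000 + 103%:R) * 1000 + 53%:R) * 1000 + 419%:R) * 1000 + 123%:R) * 1000 + 353%:R) * 1000 + 449%:R) * 1000 + 867%:R) * 1000 + 324%:R) * 1000 + 935%:R) * 1000 + 227%:R) * 1000 + 743%:R) * 1000 + 332%:R) * 1000 + 522%:R) * 1000 + 107%:R) * 1000 + 615%:R) * 1000 + 251%:R) * 1000 + 509%:R) * 1000 + 197%:R) * 1000 + 192%:R) * 1000 + 347%:R) * 1000 + 192%:R) * w^+36 - ((((((((((((((((((((((((75 * 1000 + 596%:R) * 1000 + 897%:R) * 1000 + 13%:R) * 1000 + 610%:R) * 1000 + 992%:R) * 1000 + 182%:R) * 1000 + 570%:R) * 1000 + 335%:R) * 1000 + 259%:R) * 1000 + 672%:R) * 1000 + 372%:R) * 1000 + 139%:R) * 1000 + 698%:R) * 1000 + 605%:R) * 1000 + 4%:R) * 1000 + 497%:R) * 1000 + 419%:R) * 1000 + 673%:R) * 1000 + 865%:R) * 1000 + 720%:R) * 1000 + 533%:R) * 1000 + 544%:R) * 1000 + 488%:R) * 1000 + 812%:R) * w^+37 - ((((((((((((((((((((((((23 * 1000 + 298%:R) * 1000 + 879%:R) * 1000 + 44%:R) * 1000 + 470%:R) * 1000 + 821%:R) * 1000 + 967%:R) * 1000 + 742%:R) * 1000 + 390%:R) * 1000 + 533%:R) * 1000 + 542%:R) * 1000 + 492%:R) * 1000 + 274%:R) * 1000 + 83%:R) * 1000 + 394%:R) * 1000 + 82%:R) * 1000 + 484%:R) * 1000 + 983%:R)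 * 1000 + 424%:R) * 1000 + 772%:R) * 1000 + 238%:R) * 1000 + 750%:R) * 1000 + 733%:R) * 1000 + 2%:R) * 1000 + 512%:R) * w^+38 + ((((((((((((((((((((((((19 * 1000 + 248%:R) * 1000 + 130%:R) * 1000 + 437%:R) * 1000 + 794%:R) * 1000 + 712%:R) * 1000 + 506%:R) * 1000 + 480%:R) * 1000 + 622%:R) * 1000 + 214%:R) * 1000 + 606%:R) * 1000 + 212%:R) * 1000 + 175%:R) * 1000 + 739%:R) * 1000 + 634%:R) * 1000 + 882%:R) * 1000 + 717%:R) * 1000 + 305%:R) * 1000 + 54%:R) * 1000 + 805%:R) * 1000 + 977%:R) * 1000 + 573%:R) * 1000 + 139%:R) * 1000 + 418%:R) * 1000 + 428%:R) * w^+39 + ((((((((((((((((((((((((34 * 1000 + 83%:R) * 1000 + 698%:R) * 1000 + 94%:R) * 1000 + 687%:R) * 1000 + 723%:R) * 1000 + 374%:R) * 1000 + 918%:R) * 1000 + 694%:R) * 1000 + 656%:R) * 1000 + 565%:R) * 1000 + 986%:R) * 1000 + 741%:R) * 1000 + 389%:R) * 1000 + 565%:R) * 1000 + 109%:R) * 1000 + 293%:R) * 1000 + 801%:R) * 1000 + 907%:R) * 1000 + 632%:R) * 1000 + 99%:R) * 1000 + 841%:R) * 1000 + 751%:R) * 1000 + 994%:R) * 1000 + 941%:R) * w^+40 - ((((((((((((((((((((((((29 * 1000 + 468%:R) * 1000 + 138%:R) * 1000 + 845%:R) * 1000 + 375%:R) * 1000 + 720%:R) * 1000 + 900%:R) *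 1000 + 764%:R) * 1000 + 25%:R) * 1000 + 910%:R) * 1000 + 897%:R) * 1000 + 962%:R) * 1000 + 973%:R) * 1000 + 728%:R) * 1000 + 839%:R) * 1000 + 321%:R) * 1000 + 684%:R) * 1000 + 691%:R) * 1000 + 506%:R) * 1000 + 682%:R) * 1000 + 100%:R) * 1000 + 872%:R) * 1000 + 19%:R) * 1000 + 50%:R) * 1000 + 432%:R) * w^+41 - ((((((((((((((((((((((((49 * 1000 + 119%:R) * 1000 + 421%:R) * 1000 + 421%:R) * 1000 + 553%:R) * 1000 + 514%:R) * 1000 + 189%:R) * 1000 + 648%:R) * 1000 + 269%:R) * 1000 + 116%:R) * 1000 + 807%:R) * 1000 + 644%:R) * 1000 + 910%:R) * 1000 + 599%:R) * 1000 + 523%:R) * 1000 + 506%:R) * 1000 + 673%:R) * 1000 + 719%:R) * 1000 + 494%:R) * 1000 + 199%:R) * 1000 + 753%:R) * 1000 + 421%:R) * 1000 + 283%:R) * 1000 + 764%:R) * 1000 + 713%:R) * w^+42 + ((((((((((((((((((((((((51 * 1000 + 371%:R) * 1000 + 945%:R) * 1000 + 664%:R) * 1000 + 681%:R) * 1000 + 663%:R) * 1000 + 160%:R) * 1000 + 364%:R) * 1000 + 840%:R) * 1000 + 93%:R) * 1000 + 139%:R) * 1000 + 876%:R) * 1000 + 790%:R) * 1000 + 408%:R) * 1000 + 914%:R) * 1000 + 648%:R) * 1000 + 34%:R) * 1000 + 548%:R) * 1000 + 816%:R) * 1000 + 713%:R) * 1000 + 788%:R) * 1000 + 624%:R) *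 1000 + 95%:R) * 1000 + 296%:R) * 1000 + 496%:R) * w^+43 + ((((((((((((((((((((((((17 * 1000 + 421%:R) * 1000 + 729%:R) * 1000 + 71%:R) * 1000 + 711%:R) * 1000 + 557%:R) * 1000 + 604%:R) * 1000 + 631%:R) * 1000 + 580%:R) * 1000 + 745%:R) * 1000 + 4%:R) * 1000 + 657%:R) * 1000 + 930%:R) * 1000 + 3%:R) * 1000 + 99%:R) * 1000 + 196%:R) * 1000 + 472%:R) * 1000 + 726%:R) * 1000 + 980%:R) * 1000 + 272%:R) * 1000 + 400%:R) * 1000 + 588%:R) * 1000 + 493%:R) * 1000 + 27%:R) * 1000 + 155%:R) * w^+44 - ((((((((((((((((((((((((26 * 1000 + 102%:R) * 1000 + 756%:R) * 1000 + 884%:R) * 1000 + 320%:R) * 1000 + 66%:R) * 1000 + 104%:R) * 1000 + 423%:R) * 1000 + 448%:R) * 1000 + 561%:R) * 1000 + 707%:R) * 1000 + 695%:R) * 1000 + 682%:R) * 1000 + 425%:R) * 1000 + 720%:R) * 1000 + 765%:R) * 1000 + 397%:R) * 1000 + 800%:R) * 1000 + 263%:R) * 1000 + 41%:R) * 1000 + 23%:R) * 1000 + 715%:R) * 1000 + 297%:R) * 1000 + 197%:R) * 1000 + 478%:R) * w^+45 + ((((((((((((((((((((((((39 * 1000 + 958%:R) * 1000 + 10%:R) * 1000 + 373%:R) * 1000 + 91%:R) * 1000 + 746%:R) * 1000 + 451%:R) * 1000 + 933%:R) * 1000 + 922%:R) * 1000 + 533%:R) * 1000 + 558%:R) * 1000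 + 139%:R) * 1000 + 774%:R) * 1000 + 407%:R) * 1000 + 672%:R) * 1000 + 289%:R) * 1000 + 915%:R) * 1000 + 182%:R) * 1000 + 543%:R) * 1000 + 380%:R) * 1000 + 484%:R) * 1000 + 738%:R) * 1000 + 289%:R) * 1000 + 79%:R) * 1000 + 860%:R) * w^+46 - ((((((((((((((((((((((((30 * 1000 + 45%:R) * 1000 + 785%:R) * 1000 + 507%:R) * 1000 + 419%:R) * 1000 + 752%:R) * 1000 + 931%:R) * 1000 + 634%:R) * 1000 + 226%:R) * 1000 + 346%:R) * 1000 + 490%:R) * 1000 + 357%:R) * 1000 + 730%:R) * 1000 + 963%:R) * 1000 + 759%:R) * 1000 + 615%:R) * 1000 + 779%:R) * 1000 + 70%:R) * 1000 + 878%:R) * 1000 + 77%:R) * 1000 + 232%:R) * 1000 + 593%:R) * 1000 + 745%:R) * 1000 + 317%:R) * 1000 + 974%:R) * w^+47 - ((((((((((((((((((((((((75 * 1000 + 841%:R) * 1000 + 627%:R) * 1000 + 496%:R) * 1000 + 826%:R) * 1000 + 681%:R) * 1000 + 859%:R) * 1000 + 322%:R) * 1000 + 626%:R) * 1000 + 467%:R) * 1000 + 522%:R) * 1000 + 865%:R) * 1000 + 498%:R) * 1000 + 867%:R) * 1000 + 518%:R) * 1000 + 467%:R) * 1000 + 843%:R) * 1000 + 848%:R) * 1000 + 192%:R) * 1000 + 169%:R) * 1000 + 978%:R) * 1000 + 645%:R) * 1000 + 818%:R) * 1000 + 757%:R) * 1000 + 107%:R) * w^+48 + ((((((((((((((((((((((((69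 * 1000 + 963%:R) * 1000 + 800%:R) * 1000 + 702%:R) * 1000 + 785%:R) * 1000 + 921%:R) * 1000 + 429%:R) * 1000 + 999%:R) * 1000 + 51%:R) * 1000 + 25%:R) * 1000 + 15%:R) * 1000 + 98%:R) * 1000 + 885%:R) * 1000 + 789%:R) * 1000 + 152%:R) * 1000 + 490%:R) * 1000 + 783%:R) * 1000 + 486%:R) * 1000 + 390%:R) * 1000 + 805%:R) * 1000 + 714%:R) * 1000 + 106%:R) * 1000 + 883%:R) * 1000 + 356%:R) * 1000 + 788%:R) * w^+49 + ((((((((((((((((((((((((69 * 1000 + 445%:R) * 1000 + 28%:R) * 1000 + 339%:R) * 1000 + 361%:R) * 1000 + 762%:R) * 1000 + 740%:R) * 1000 + 601%:R) * 1000 + 371%:R) * 1000 + 412%:R) * 1000 + 771%:R) * 1000 + 682%:R) * 1000 + 616%:R) * 1000 + 203%:R) * 1000 + 563%:R) * 1000 + 722%:R) * 1000 + 851%:R) * 1000 + 374%:R) * 1000 + 440%:R) * 1000 + 30%:R) * 1000 + 281%:R) * 1000 + 760%:R) * 1000 + 620%:R) * 1000 + 272%:R) * 1000 + 225%:R) * w^+50 - ((((((((((((((((((((((((66 * 1000 + 293%:R) * 1000 + 300%:R) * 1000 + 764%:R) * 1000 + 811%:R) * 1000 + 542%:R) * 1000 + 680%:R) * 1000 + 752%:R) * 1000 + 900%:R) * 1000 + 482%:R) * 1000 + 880%:R) * 1000 + 960%:R) * 1000 + 892%:R) * 1000 + 910%:R) * 1000 + 707%:R) * 1000 + 506%:R)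 * 1000 + 872%:R) * 1000 + 74%:R) * 1000 + 783%:R) * 1000 + 607%:R) * 1000 + 644%:R) * 1000 + 954%:R) * 1000 + 534%:R) * 1000 + 610%:R) * 1000 + 422%:R) * w^+51 - ((((((((((((((((((((((((51 * 1000 + 435%:R) * 1000 + 139%:R) * 1000 + 846%:R) * 1000 + 876%:R) * 1000 + 900%:R) * 1000 + 926%:R) * 1000 + 715%:R) * 1000 + 940%:R) * 1000 + 61%:R) * 1000 + 76%:R) * 1000 + 223%:R) * 1000 + 612%:R) * 1000 + 880%:R) * 1000 + 360%:R) * 1000 + 804%:R) * 1000 + 614%:R) * 1000 + 352%:R) * 1000 + 100%:R) * 1000 + 215%:R) * 1000 + 230%:R) * 1000 + 167%:R) * 1000 + 870%:R) * 1000 + 454%:R) * 1000 + 119%:R) * w^+52 + ((((((((((((((((((((((((49 * 1000 + 749%:R) * 1000 + 517%:R) * 1000 + 594%:R) * 1000 + 950%:R) * 1000 + 361%:R) * 1000 + 347%:R) * 1000 + 789%:R) * 1000 + 795%:R) * 1000 + 610%:R) * 1000 + 724%:R) * 1000 + 642%:R) * 1000 + 129%:R) * 1000 + 127%:R) * 1000 + 458%:R) * 1000 + 72%:R) * 1000 + 733%:R) * 1000 + 915%:R) * 1000 + 762%:R) * 1000 + 291%:R) * 1000 + 329%:R) * 1000 + 471%:R) * 1000 + 570%:R) * 1000 + 566%:R) * 1000 + 320%:R) * w^+53 + ((((((((((((((((((((((((34 * 1000 + 615%:R) * 1000 + 197%:R) * 1000 + 344%:R) * 1000 + 626%:R) *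 1000 + 43%:R) * 1000 + 646%:R) * 1000 + 602%:R) * 1000 + 611%:R) * 1000 + 898%:R) * 1000 + 150%:R) * 1000 + 954%:R) * 1000 + 692%:R) * 1000 + 25%:R) * 1000 + 858%:R) * 1000 + 406%:R) * 1000 + 171%:R) * 1000 + 757%:R) * 1000 + 631%:R) * 1000 + 508%:R) * 1000 + 192%:R) * 1000 + 633%:R) * 1000 + 629%:R) * 1000 + 410%:R) * 1000 + 190%:R) * w^+54 - ((((((((((((((((((((((((34 * 1000 + 218%:R) * 1000 + 112%:R) * 1000 + 160%:R) * 1000 + 30%:R) * 1000 + 752%:R) * 1000 + 350%:R) * 1000 + 118%:R) * 1000 + 364%:R) * 1000 + 269%:R) * 1000 + 904%:R) * 1000 + 895%:R) * 1000 + 712%:R) * 1000 + 505%:R) * 1000 + 250%:R) * 1000 + 553%:R) * 1000 + 592%:R) * 1000 + 417%:R) * 1000 + 311%:R) * 1000 + 242%:R) * 1000 + 941%:R) * 1000 + 862%:R) * 1000 + 46%:R) * 1000 + 295%:R) * 1000 + 908%:R) * w^+55 - ((((((((((((((((((((((((18 * 1000 + 626%:R) * 1000 + 665%:R) * 1000 + 350%:R) * 1000 + 828%:R) * 1000 + 158%:R) * 1000 + 876%:R) * 1000 + 676%:R) * 1000 + 612%:R) * 1000 + 801%:R) * 1000 + 865%:R) * 1000 + 223%:R) * 1000 + 722%:R) * 1000 + 848%:R) * 1000 + 391%:R) * 1000 + 338%:R) * 1000 + 378%:R) * 1000 + 583%:R) * 1000 + 644%:R) * 1000 + 760%:R) *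 1000 + 344%:R) * 1000 + 476%:R) * 1000 + 963%:R) * 1000 + 53%:R) * 1000 + 909%:R) * w^+56 + ((((((((((((((((((((((((18 * 1000 + 798%:R) * 1000 + 453%:R) * 1000 + 664%:R) * 1000 + 268%:R) * 1000 + 237%:R) * 1000 + 121%:R) * 1000 + 866%:R) * 1000 + 585%:R) * 1000 + 112%:R) * 1000 + 705%:R) * 1000 + 677%:R) * 1000 + 714%:R) * 1000 + 19%:R) * 1000 + 807%:R) * 1000 + 134%:R) * 1000 + 862%:R) * 1000 + 12%:R) * 1000 + 302%:R) * 1000 + 127%:R) * 1000 + 930%:R) * 1000 + 312%:R) * 1000 + 797%:R) * 1000 + 720%:R) * 1000 + 154%:R) * w^+57 + ((((((((((((((((((((((((7 * 1000 + 919%:R) * 1000 + 72%:R) * 1000 + 588%:R) * 1000 + 822%:R) * 1000 + 588%:R) * 1000 + 286%:R) * 1000 + 304%:R) * 1000 + 189%:R) * 1000 + 411%:R) * 1000 + 542%:R) * 1000 + 974%:R) * 1000 + 711%:R) * 1000 + 219%:R) * 1000 + 563%:R) * 1000 + 356%:R) * 1000 + 817%:R) * 1000 + 695%:R) * 1000 + 154%:R) * 1000 + 539%:R) * 1000 + 92%:R) * 1000 + 675%:R) * 1000 + 786%:R) * 1000 + 730%:R) * 1000 + 60%:R) * w^+58 - ((((((((((((((((((((((((7 * 1000 + 959%:R) * 1000 + 1%:R) * 1000 + 530%:R) * 1000 + 496%:R) * 1000 + 418%:R) * 1000 + 701%:R) * 1000 + 257%:R) * 1000 + 754%:R) * 1000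 + 797%:R) * 1000 + 375%:R) * 1000 + 424%:R) * 1000 + 545%:R) * 1000 + 379%:R) * 1000 + 243%:R) * 1000 + 143%:R) * 1000 + 564%:R) * 1000 + 653%:R) * 1000 + 554%:R) * 1000 + 235%:R) * 1000 + 749%:R) * 1000 + 778%:R) * 1000 + 467%:R) * 1000 + 555%:R) * 1000 + 628%:R) * w^+59 - ((((((((((((((((((((((((3 * 1000 + 668%:R) * 1000 + 113%:R) * 1000 + 655%:R) * 1000 + 32%:R) * 1000 + 876%:R) * 1000 + 717%:R) * 1000 + 12%:R) * 1000 + 975%:R) * 1000 + 300%:R) * 1000 + 385%:R) * 1000 + 375%:R) * 1000 + 175%:R) * 1000 + 262%:R) * 1000 + 580%:R) * 1000 + 817%:R) * 1000 + 917%:R) * 1000 + 174%:R) * 1000 + 454%:R) * 1000 + 977%:R) * 1000 + 551%:R) * 1000 + 34%:R) * 1000 + 757%:R) * 1000 + 502%:R) * 1000 + 496%:R) * w^+60 + ((((((((((((((((((((((((3 * 1000 + 823%:R) * 1000 + 220%:R) * 1000 + 134%:R) * 1000 + 659%:R) * 1000 + 760%:R) * 1000 + 175%:R) * 1000 + 126%:R) * 1000 + 967%:R) * 1000 + 158%:R) * 1000 + 362%:R) * 1000 + 366%:R) * 1000 + 3%:R) * 1000 + 547%:R) * 1000 + 265%:R) * 1000 + 791%:R) * 1000 + 330%:R) * 1000 + 988%:R) * 1000 + 844%:R) * 1000 + 128%:R) * 1000 + 45%:R) * 1000 + 819%:R) * 1000 + 605%:R) * 1000 + 500%:R) * 1000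 + 142%:R) * w^+61 + (((((((((((((((((((((((823 * 1000 + 913%:R) * 1000 + 691%:R) * 1000 + 356%:R) * 1000 + 991%:R) * 1000 + 433%:R) * 1000 + 255%:R) * 1000 + 219%:R) * 1000 + 200%:R) * 1000 + 95%:R) * 1000 + 495%:R) * 1000 + 664%:R) * 1000 + 5%:R) * 1000 + 615%:R) * 1000 + 116%:R) * 1000 + 184%:R) * 1000 + 651%:R) * 1000 + 28%:R) * 1000 + 343%:R) * 1000 + 244%:R) * 1000 + 680%:R) * 1000 + 364%:R) * 1000 + 209%:R) * 1000 + 85%:R) * w^+62 - (((((((((((((((((((((((977 * 1000 + 475%:R) * 1000 + 672%:R) * 1000 + 932%:R) * 1000 + 793%:R) * 1000 + 971%:R) * 1000 + 556%:R) * 1000 + 776%:R) * 1000 + 8%:R) * 1000 + 694%:R) * 1000 + 723%:R) * 1000 + 593%:R) * 1000 + 723%:R) * 1000 + 819%:R) * 1000 + 115%:R) * 1000 + 190%:R) * 1000 + 338%:R) * 1000 + 982%:R) * 1000 + 461%:R) * 1000 + 609%:R) * 1000 + 950%:R) * 1000 + 570%:R) * 1000 + 215%:R) * 1000 + 846%:R) * w^+63 + (((((((((((((((((((((((566 * 1000 + 719%:R) * 1000 + 903%:R) * 1000 + 612%:R) * 1000 + 252%:R) * 1000 + 412%:R) * 1000 + 60%:R) * 1000 + 239%:R) * 1000 + 295%:R) * 1000 + 963%:R) * 1000 + 262%:R) * 1000 + 819%:R) * 1000 + 661%:R) * 1000 + 736%:R) * 1000 + 34%:R) * 1000 + 814%:R)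 * 1000 + 251%:R) * 1000 + 970%:R) * 1000 + 431%:R) * 1000 + 907%:R) * 1000 + 866%:R) * 1000 + 874%:R) * 1000 + 765%:R) * 1000 + 813%:R) * w^+64 - (((((((((((((((((((((((540 * 1000 + 479%:R) * 1000 + 31%:R) * 1000 + 441%:R) * 1000 + 994%:R) * 1000 + 459%:R) * 1000 + 646%:R) * 1000 + 362%:R) * 1000 + 841%:R) * 1000 + 449%:R) * 1000 + 910%:R) * 1000 + 124%:R) * 1000 + 655%:R) * 1000 + 828%:R) * 1000 + 159%:R) * 1000 + 902%:R) * 1000 + 757%:R) * 1000 + 133%:R) * 1000 + 406%:R) * 1000 + 95%:R) * 1000 + 506%:R) * 1000 + 102%:R) * 1000 + 937%:R) * 1000 + 688%:R) * w^+65 - (((((((((((((((((((((((414 * 1000 + 42%:R) * 1000 + 606%:R) * 1000 + 546%:R) * 1000 + 550%:R) * 1000 + 56%:R) * 1000 + 822%:R) * 1000 + 722%:R) * 1000 + 465%:R) * 1000 + 549%:R) * 1000 + 332%:R) * 1000 + 779%:R) * 1000 + 607%:R) * 1000 + 180%:R) * 1000 + 865%:R) * 1000 + 872%:R) * 1000 + 461%:R) * 1000 + 708%:R) * 1000 + 316%:R) * 1000 + 556%:R) * 1000 + 751%:R) * 1000 + 1%:R) * 1000 + 366%:R) * 1000 + 482%:R) * w^+66 + (((((((((((((((((((((((447 * 1000 + 234%:R) * 1000 + 129%:R) * 1000 + 53%:R) * 1000 + 976%:R) * 1000 + 410%:R) * 1000 + 98%:R) * 1000 + 206%:R) * 1000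 + 584%:R) * 1000 + 681%:R) * 1000 + 233%:R) * 1000 + 454%:R) * 1000 + 856%:R) * 1000 + 723%:R) * 1000 + 497%:R) * 1000 + 81%:R) * 1000 + 488%:R) * 1000 + 844%:R) * 1000 + 525%:R) * 1000 + 211%:R) * 1000 + 904%:R) * 1000 + 149%:R) * 1000 + 792%:R) * 1000 + 668%:R) * w^+67) * Qexpr w + ((((((((((((((((((((((((36 * 1000 + 980%:R) * 1000 + 696%:R) * 1000 + 839%:R) * 1000 + 342%:R) * 1000 + 995%:R) * 1000 + 637%:R) * 1000 + 789%:R) * 1000 + 941%:R) * 1000 + 557%:R) * 1000 + 356%:R) * 1000 + 535%:R) * 1000 + 141%:R) * 1000 + 890%:R) * 1000 + 114%:R) * 1000 + 595%:R) * 1000 + 902%:R) * 1000 + 122%:R) * 1000 + 926%:R) * 1000 + 443%:R) * 1000 + 664%:R) * 1000 + 824%:R) * 1000 + 520%:R) * 1000 + 5%:R) - (((((((((((((((((((((((543 * 1000 + 58%:R) * 1000 + 509%:R) * 1000 + 123%:R) * 1000 + 562%:R) * 1000 + 366%:R) * 1000 + 770%:R) * 1000 + 64%:R) * 1000 + 299%:R) * 1000 + 912%:R) * 1000 + 112%:R) * 1000 + 52%:R) * 1000 + 878%:R) * 1000 + 972%:R) * 1000 + 670%:R) * 1000 + 258%:R) * 1000 + 315%:R) * 1000 + 241%:R) * 1000 + 637%:R) * 1000 + 426%:R) * 1000 + 723%:R) * 1000 + 799%:R) * 1000 + 109%:R) * 1000 + 348%:R) * w^+1 + ((((((((((((((((((((((((2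 * 1000 + 266%:R) * 1000 + 719%:R) * 1000 + 246%:R) * 1000 + 473%:R) * 1000 + 745%:R) * 1000 + 550%:R) * 1000 + 18%:R) * 1000 + 37%:R) * 1000 + 165%:R) * 1000 + 588%:R) * 1000 + 431%:R) * 1000 + 704%:R) * 1000 + 728%:R) * 1000 + 54%:R) * 1000 + 933%:R) * 1000 + 228%:R) * 1000 + 513%:R) * 1000 + 272%:R) * 1000 + 854%:R) * 1000 + 900%:R) * 1000 + 825%:R) * 1000 + 891%:R) * 1000 + 197%:R) * 1000 + 399%:R) * w^+2 + ((((((((((((((((((((((((3 * 1000 + 868%:R) * 1000 + 934%:R) * 1000 + 269%:R) * 1000 + 431%:R) * 1000 + 456%:R) * 1000 + 534%:R) * 1000 + 218%:R) * 1000 + 681%:R) * 1000 + 904%:R) * 1000 + 913%:R) * 1000 + 932%:R) * 1000 + 510%:R) * 1000 + 478%:R) * 1000 + 80%:R) * 1000 + 533%:R) * 1000 + 546%:R) * 1000 + 426%:R) * 1000 + 10%:R) * 1000 + 585%:R) * 1000 + 281%:R) * 1000 + 195%:R) * 1000 + 2%:R) * 1000 + 219%:R) * 1000 + 490%:R) * w^+3 + ((((((((((((((((((((((((10 * 1000 + 5%:R) * 1000 + 207%:R) * 1000 + 54%:R) * 1000 + 26%:R) * 1000 + 824%:R) * 1000 + 685%:R) * 1000 + 354%:R) * 1000 + 846%:R) * 1000 + 284%:R) * 1000 + 718%:R) * 1000 + 825%:R) * 1000 + 992%:R) * 1000 + 88%:R) * 1000 + 320%:R) * 1000 + 933%:R)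 * 1000 + 987%:R) * 1000 + 912%:R) * 1000 + 459%:R) * 1000 + 396%:R) * 1000 + 339%:R) * 1000 + 661%:R) * 1000 + 505%:R) * 1000 + 585%:R) * 1000 + 87%:R) * w^+4 + ((((((((((((((((((((((((18 * 1000 + 502%:R) * 1000 + 954%:R) * 1000 + 955%:R) * 1000 + 358%:R) * 1000 + 982%:R) * 1000 + 99%:R) * 1000 + 659%:R) * 1000 + 65%:R) * 1000 + 332%:R) * 1000 + 975%:R) * 1000 + 681%:R) * 1000 + 623%:R) * 1000 + 338%:R) * 1000 + 280%:R) * 1000 + 825%:R) * 1000 + 583%:R) * 1000 + 278%:R) * 1000 + 164%:R) * 1000 + 566%:R) * 1000 + 428%:R) * 1000 + 674%:R) * 1000 + 123%:R) * 1000 + 534%:R) * 1000 + 556%:R) * w^+5 + ((((((((((((((((((((((((37 * 1000 + 371%:R) * 1000 + 758%:R) * 1000 + 788%:R) * 1000 + 673%:R) * 1000 + 754%:R) * 1000 + 346%:R) * 1000 + 176%:R) * 1000 + 968%:R) * 1000 + 503%:R) * 1000 + 478%:R) * 1000 + 390%:R) * 1000 + 684%:R) * 1000 + 599%:R) * 1000 + 674%:R) * 1000 + 762%:R) * 1000 + 397%:R) * 1000 + 198%:R) * 1000 + 852%:R) * 1000 + 376%:R) * 1000 + 936%:R) * 1000 + 381%:R) * 1000 + 349%:R) * 1000 + 35%:R) * 1000 + 240%:R) * w^+6 + ((((((((((((((((((((((((49 * 1000 + 912%:R) * 1000 + 829%:R) * 1000 + 340%:R) * 1000 + 735%:R) *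 1000 + 918%:R) * 1000 + 654%:R) * 1000 + 904%:R) * 1000 + 903%:R) * 1000 + 979%:R) * 1000 + 189%:R) * 1000 + 266%:R) * 1000 + 165%:R) * 1000 + 942%:R) * 1000 + 975%:R) * 1000 + 433%:R) * 1000 + 699%:R) * 1000 + 884%:R) * 1000 + 362%:R) * 1000 + 746%:R) * 1000 + 543%:R) * 1000 + 868%:R) * 1000 + 756%:R) * 1000 + 629%:R) * 1000 + 952%:R) * w^+7 + ((((((((((((((((((((((((68 * 1000 + 894%:R) * 1000 + 343%:R) * 1000 + 456%:R) * 1000 + 335%:R) * 1000 + 925%:R) * 1000 + 470%:R) * 1000 + 522%:R) * 1000 + 353%:R) * 1000 + 217%:R) * 1000 + 911%:R) * 1000 + 893%:R) * 1000 + 236%:R) * 1000 + 363%:R) * 1000 + 598%:R) * 1000 + 84%:R) * 1000 + 814%:R) * 1000 + 47%:R) * 1000 + 610%:R) * 1000 + 853%:R) * 1000 + 437%:R) * 1000 + 138%:R) * 1000 + 672%:R) * 1000 + 198%:R) * 1000 + 937%:R) * w^+8 + ((((((((((((((((((((((((68 * 1000 + 511%:R) * 1000 + 993%:R) * 1000 + 935%:R) * 1000 + 904%:R) * 1000 + 732%:R) * 1000 + 767%:R) * 1000 + 407%:R) * 1000 + 706%:R) * 1000 + 67%:R) * 1000 + 840%:R) * 1000 + 30%:R) * 1000 + 969%:R) * 1000 + 546%:R) * 1000 + 468%:R) * 1000 + 402%:R) * 1000 + 859%:R) * 1000 + 978%:R) * 1000 + 121%:R) * 1000 + 426%:R) *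 1000 + 410%:R) * 1000 + 734%:R) * 1000 + 684%:R) * 1000 + 742%:R) * 1000 + 338%:R) * w^+9 + ((((((((((((((((((((((((33 * 1000 + 237%:R) * 1000 + 518%:R) * 1000 + 320%:R) * 1000 + 907%:R) * 1000 + 365%:R) * 1000 + 82%:R) * 1000 + 831%:R) * 1000 + 132%:R) * 1000 + 868%:R) * 1000 + 353%:R) * 1000 + 225%:R) * 1000 + 436%:R) * 1000 + 536%:R) * 1000 + 962%:R) * 1000 + 333%:R) * 1000 + 513%:R) * 1000 + 531%:R) * 1000 + 91%:R) * 1000 + 35%:R) * 1000 + 353%:R) * 1000 + 532%:R) * 1000 + 94%:R) * 1000 + 358%:R) * 1000 + 493%:R) * w^+10 - ((((((((((((((((((((((((16 * 1000 + 912%:R) * 1000 + 425%:R) * 1000 + 614%:R) * 1000 + 945%:R) * 1000 + 362%:R) * 1000 + 843%:R) * 1000 + 908%:R) * 1000 + 63%:R) * 1000 + 626%:R) * 1000 + 221%:R) * 1000 + 561%:R) * 1000 + 107%:R) * 1000 + 825%:R) * 1000 + 109%:R) * 1000 + 305%:R) * 1000 + 200%:R) * 1000 + 54%:R) * 1000 + 641%:R) * 1000 + 762%:R) * 1000 + 185%:R) * 1000 + 760%:R) * 1000 + 703%:R) * 1000 + 850%:R) * 1000 + 332%:R) * w^+11 - ((((((((((((((((((((((((46 * 1000 + 784%:R) * 1000 + 573%:R) * 1000 + 908%:R) * 1000 + 809%:R) * 1000 + 623%:R) * 1000 + 375%:R) * 1000 + 514%:R) * 1000 + 457%:R) * 1000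 + 982%:R) * 1000 + 904%:R) * 1000 + 840%:R) * 1000 + 218%:R) * 1000 + 523%:R) * 1000 + 191%:R) * 1000 + 153%:R) * 1000 + 456%:R) * 1000 + 267%:R) * 1000 + 386%:R) * 1000 + 594%:R) * 1000 + 68%:R) * 1000 + 819%:R) * 1000 + 959%:R) * 1000 + 443%:R) * 1000 + 722%:R) * w^+12 - ((((((((((((((((((((((((28 * 1000 + 918%:R) * 1000 + 672%:R) * 1000 + 54%:R) * 1000 + 361%:R) * 1000 + 165%:R) * 1000 + 31%:R) * 1000 + 696%:R) * 1000 + 415%:R) * 1000 + 729%:R) * 1000 + 931%:R) * 1000 + 370%:R) * 1000 + 522%:R) * 1000 + 78%:R) * 1000 + 610%:R) * 1000 + 647%:R) * 1000 + 583%:R) * 1000 + 389%:R) * 1000 + 701%:R) * 1000 + 469%:R) * 1000 + 882%:R) * 1000 + 832%:R) * 1000 + 248%:R) * 1000 + 593%:R) * 1000 + 798%:R) * w^+13 - ((((((((((((((((((((((((32 * 1000 + 631%:R) * 1000 + 922%:R) * 1000 + 690%:R) * 1000 + 60%:R) * 1000 + 942%:R) * 1000 + 246%:R) * 1000 + 722%:R) * 1000 + 107%:R) * 1000 + 671%:R) * 1000 + 306%:R) * 1000 + 36%:R) * 1000 + 719%:R) * 1000 + 459%:R) * 1000 + 640%:R) * 1000 + 0%:R) * 1000 + 644%:R) * 1000 + 740%:R) * 1000 + 987%:R) * 1000 + 492%:R) * 1000 + 670%:R) * 1000 + 278%:R) * 1000 + 366%:R) * 1000 + 230%:R) * 1000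 + 788%:R) * w^+14 - ((((((((((((((((((((((((75 * 1000 + 92%:R) * 1000 + 940%:R) * 1000 + 398%:R) * 1000 + 170%:R) * 1000 + 871%:R) * 1000 + 664%:R) * 1000 + 147%:R) * 1000 + 483%:R) * 1000 + 305%:R) * 1000 + 159%:R) * 1000 + 895%:R) * 1000 + 73%:R) * 1000 + 52%:R) * 1000 + 857%:R) * 1000 + 508%:R) * 1000 + 548%:R) * 1000 + 683%:R) * 1000 + 977%:R) * 1000 + 730%:R) * 1000 + 479%:R) * 1000 + 14%:R) * 1000 + 304%:R) * 1000 + 943%:R) * 1000 + 728%:R) * w^+15 - ((((((((((((((((((((((((149 * 1000 + 520%:R) * 1000 + 862%:R) * 1000 + 233%:R) * 1000 + 369%:R) * 1000 + 385%:R) * 1000 + 204%:R) * 1000 + 7%:R) * 1000 + 885%:R) * 1000 + 207%:R) * 1000 + 488%:R) * 1000 + 15%:R) * 1000 + 197%:R) * 1000 + 248%:R) * 1000 + 284%:R) * 1000 + 115%:R) * 1000 + 679%:R) * 1000 + 105%:R) * 1000 + 859%:R) * 1000 + 938%:R) * 1000 + 785%:R) * 1000 + 491%:R) * 1000 + 214%:R) * 1000 + 359%:R) * 1000 + 405%:R) * w^+16 - ((((((((((((((((((((((((144 * 1000 + 89%:R) * 1000 + 50%:R) * 1000 + 853%:R) * 1000 + 338%:R) * 1000 + 288%:R) * 1000 + 501%:R) * 1000 + 267%:R) * 1000 + 390%:R) * 1000 + 960%:R) * 1000 + 705%:R) * 1000 + 825%:R) * 1000 + 655%:R) * 1000 +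 819%:R) * 1000 + 510%:R) * 1000 + 506%:R) * 1000 + 138%:R) * 1000 + 490%:R) * 1000 + 559%:R) * 1000 + 256%:R) * 1000 + 449%:R) * 1000 + 492%:R) * 1000 + 956%:R) * 1000 + 749%:R) * 1000 + 406%:R) * w^+17 - ((((((((((((((((((((((((77 * 1000 + 728%:R) * 1000 + 995%:R) * 1000 + 110%:R) * 1000 + 157%:R) * 1000 + 160%:R) * 1000 + 609%:R) * 1000 + 545%:R) * 1000 + 261%:R) * 1000 + 106%:R) * 1000 + 299%:R) * 1000 + 782%:R) * 1000 + 811%:R) * 1000 + 862%:R) * 1000 + 880%:R) * 1000 + 941%:R) * 1000 + 236%:R) * 1000 + 502%:R) * 1000 + 579%:R) * 1000 + 594%:R) * 1000 + 296%:R) * 1000 + 522%:R) * 1000 + 188%:R) * 1000 + 36%:R) * 1000 + 415%:R) * w^+18 - ((((((((((((((((((((((((25 * 1000 + 428%:R) * 1000 + 963%:R) * 1000 + 502%:R) * 1000 + 489%:R) * 1000 + 428%:R) * 1000 + 733%:R) * 1000 + 610%:R) * 1000 + 8%:R) * 1000 + 580%:R) * 1000 + 771%:R) * 1000 + 611%:R) * 1000 + 225%:R) * 1000 + 658%:R) * 1000 + 14%:R) * 1000 + 296%:R) * 1000 + 23%:R) * 1000 + 369%:R) * 1000 + 613%:R) * 1000 + 320%:R) * 1000 + 750%:R) * 1000 + 743%:R) * 1000 + 159%:R) * 1000 + 267%:R) * 1000 + 46%:R) * w^+19 - ((((((((((((((((((((((((28 * 1000 + 253%:R) * 1000 + 213%:R)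 * 1000 + 60%:R) * 1000 + 789%:R) * 1000 + 396%:R) * 1000 + 540%:R) * 1000 + 682%:R) * 1000 + 970%:R) * 1000 + 11%:R) * 1000 + 642%:R) * 1000 + 841%:R) * 1000 + 178%:R) * 1000 + 143%:R) * 1000 + 463%:R) * 1000 + 4%:R) * 1000 + 123%:R) * 1000 + 351%:R) * 1000 + 54%:R) * 1000 + 832%:R) * 1000 + 494%:R) * 1000 + 106%:R) * 1000 + 743%:R) * 1000 + 565%:R) * 1000 + 679%:R) * w^+20 - ((((((((((((((((((((((((43 * 1000 + 465%:R) * 1000 + 456%:R) * 1000 + 831%:R) * 1000 + 90%:R) * 1000 + 177%:R) * 1000 + 670%:R) * 1000 + 555%:R) * 1000 + 543%:R) * 1000 + 750%:R) * 1000 + 108%:R) * 1000 + 658%:R) * 1000 + 228%:R) * 1000 + 862%:R) * 1000 + 235%:R) * 1000 + 333%:R) * 1000 + 917%:R) * 1000 + 990%:R) * 1000 + 732%:R) * 1000 + 765%:R) * 1000 + 987%:R) * 1000 + 313%:R) * 1000 + 164%:R) * 1000 + 204%:R) * 1000 + 390%:R) * w^+21 - ((((((((((((((((((((((((15 * 1000 + 473%:R) * 1000 + 277%:R) * 1000 + 111%:R) * 1000 + 392%:R) * 1000 + 29%:R) * 1000 + 987%:R) * 1000 + 717%:R) * 1000 + 482%:R) * 1000 + 188%:R) * 1000 + 971%:R) * 1000 + 714%:R) * 1000 + 466%:R) * 1000 + 970%:R) * 1000 + 394%:R) * 1000 + 787%:R) * 1000 + 677%:R) * 1000 + 239%:R)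 * 1000 + 238%:R) * 1000 + 99%:R) * 1000 + 102%:R) * 1000 + 598%:R) * 1000 + 973%:R) * 1000 + 607%:R) * 1000 + 600%:R) * w^+22 + ((((((((((((((((((((((((35 * 1000 + 548%:R) * 1000 + 259%:R) * 1000 + 384%:R) * 1000 + 130%:R) * 1000 + 897%:R) * 1000 + 658%:R) * 1000 + 106%:R) * 1000 + 327%:R) * 1000 + 387%:R) * 1000 + 256%:R) * 1000 + 267%:R) * 1000 + 746%:R) * 1000 + 171%:R) * 1000 + 202%:R) * 1000 + 195%:R) * 1000 + 828%:R) * 1000 + 705%:R) * 1000 + 499%:R) * 1000 + 27%:R) * 1000 + 786%:R) * 1000 + 692%:R) * 1000 + 695%:R) * 1000 + 8%:R) * 1000 + 224%:R) * w^+23 + ((((((((((((((((((((((((72 * 1000 + 190%:R) * 1000 + 118%:R) * 1000 + 314%:R) * 1000 + 211%:R) * 1000 + 369%:R) * 1000 + 952%:R) * 1000 + 208%:R) * 1000 + 550%:R) * 1000 + 22%:R) * 1000 + 129%:R) * 1000 + 932%:R) * 1000 + 371%:R) * 1000 + 188%:R) * 1000 + 41%:R) * 1000 + 200%:R) * 1000 + 29%:R) * 1000 + 862%:R) * 1000 + 913%:R) * 1000 + 504%:R) * 1000 + 960%:R) * 1000 + 368%:R) * 1000 + 641%:R) * 1000 + 158%:R) * 1000 + 977%:R) * w^+24 + ((((((((((((((((((((((((67 * 1000 + 308%:R) * 1000 + 865%:R) * 1000 + 508%:R) * 1000 + 499%:R) * 1000 + 703%:R) * 1000 + 316%:R) *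 1000 + 107%:R) * 1000 + 255%:R) * 1000 + 173%:R) * 1000 + 484%:R) * 1000 + 407%:R) * 1000 + 643%:R) * 1000 + 678%:R) * 1000 + 543%:R) * 1000 + 215%:R) * 1000 + 37%:R) * 1000 + 678%:R) * 1000 + 562%:R) * 1000 + 649%:R) * 1000 + 413%:R) * 1000 + 155%:R) * 1000 + 117%:R) * 1000 + 408%:R) * 1000 + 84%:R) * w^+25 + ((((((((((((((((((((((((49 * 1000 + 751%:R) * 1000 + 594%:R) * 1000 + 499%:R) * 1000 + 467%:R) * 1000 + 556%:R) * 1000 + 497%:R) * 1000 + 924%:R) * 1000 + 170%:R) * 1000 + 407%:R) * 1000 + 600%:R) * 1000 + 433%:R) * 1000 + 774%:R) * 1000 + 95%:R) * 1000 + 75%:R) * 1000 + 715%:R) * 1000 + 785%:R) * 1000 + 627%:R) * 1000 + 349%:R) * 1000 + 303%:R) * 1000 + 951%:R) * 1000 + 278%:R) * 1000 + 306%:R) * 1000 + 558%:R) * 1000 + 451%:R) * w^+26 + ((((((((((((((((((((((((33 * 1000 + 549%:R) * 1000 + 411%:R) * 1000 + 192%:R) * 1000 + 357%:R) * 1000 + 343%:R) * 1000 + 912%:R) * 1000 + 516%:R) * 1000 + 195%:R) * 1000 + 698%:R) * 1000 + 434%:R) * 1000 + 278%:R) * 1000 + 385%:R) * 1000 + 492%:R) * 1000 + 44%:R) * 1000 + 915%:R) * 1000 + 796%:R) * 1000 + 143%:R) * 1000 + 839%:R) * 1000 + 488%:R) * 1000 + 949%:R) * 1000 + 762%:R) *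 1000 + 142%:R) * 1000 + 718%:R) * 1000 + 56%:R) * w^+27 + ((((((((((((((((((((((((18 * 1000 + 624%:R) * 1000 + 426%:R) * 1000 + 993%:R) * 1000 + 890%:R) * 1000 + 671%:R) * 1000 + 976%:R) * 1000 + 498%:R) * 1000 + 69%:R) * 1000 + 988%:R) * 1000 + 869%:R) * 1000 + 781%:R) * 1000 + 734%:R) * 1000 + 744%:R) * 1000 + 536%:R) * 1000 + 872%:R) * 1000 + 312%:R) * 1000 + 316%:R) * 1000 + 10%:R) * 1000 + 461%:R) * 1000 + 655%:R) * 1000 + 277%:R) * 1000 + 439%:R) * 1000 + 669%:R) * 1000 + 486%:R) * w^+28 + ((((((((((((((((((((((((7 * 1000 + 739%:R) * 1000 + 410%:R) * 1000 + 97%:R) * 1000 + 58%:R) * 1000 + 464%:R) * 1000 + 288%:R) * 1000 + 306%:R) * 1000 + 870%:R) * 1000 + 327%:R) * 1000 + 909%:R) * 1000 + 247%:R) * 1000 + 408%:R) * 1000 + 261%:R) * 1000 + 6%:R) * 1000 + 946%:R) * 1000 + 22%:R) * 1000 + 576%:R) * 1000 + 504%:R) * 1000 + 659%:R) * 1000 + 211%:R) * 1000 + 108%:R) * 1000 + 210%:R) * 1000 + 861%:R) * 1000 + 712%:R) * w^+29 + ((((((((((((((((((((((((3 * 1000 + 611%:R) * 1000 + 685%:R) * 1000 + 540%:R) * 1000 + 142%:R) * 1000 + 145%:R) * 1000 + 24%:R) * 1000 + 644%:R) * 1000 + 448%:R) * 1000 + 360%:R) * 1000 + 573%:R) * 1000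 + 290%:R) * 1000 + 938%:R) * 1000 + 397%:R) * 1000 + 442%:R) * 1000 + 133%:R) * 1000 + 352%:R) * 1000 + 657%:R) * 1000 + 71%:R) * 1000 + 848%:R) * 1000 + 111%:R) * 1000 + 321%:R) * 1000 + 231%:R) * 1000 + 232%:R) * 1000 + 53%:R) * w^+30 + (((((((((((((((((((((((921 * 1000 + 330%:R) * 1000 + 115%:R) * 1000 + 481%:R) * 1000 + 118%:R) * 1000 + 163%:R) * 1000 + 193%:R) * 1000 + 601%:R) * 1000 + 187%:R) * 1000 + 867%:R) * 1000 + 342%:R) * 1000 + 229%:R) * 1000 + 13%:R) * 1000 + 466%:R) * 1000 + 394%:R) * 1000 + 566%:R) * 1000 + 191%:R) * 1000 + 705%:R) * 1000 + 513%:R) * 1000 + 997%:R) * 1000 + 103%:R) * 1000 + 955%:R) * 1000 + 877%:R) * 1000 + 984%:R) * w^+31 - (((((((((((((((((((((((480 * 1000 + 425%:R) * 1000 + 651%:R) * 1000 + 561%:R) * 1000 + 402%:R) * 1000 + 763%:R) * 1000 + 373%:R) * 1000 + 690%:R) * 1000 + 703%:R) * 1000 + 813%:R) * 1000 + 134%:R) * 1000 + 130%:R) * 1000 + 106%:R) * 1000 + 266%:R) * 1000 + 128%:R) * 1000 + 290%:R) * 1000 + 515%:R) * 1000 + 980%:R) * 1000 + 733%:R) * 1000 + 867%:R) * 1000 + 57%:R) * 1000 + 298%:R) * 1000 + 218%:R) * 1000 + 854%:R) * w^+32 - (((((((((((((((((((((((447 * 1000 + 234%:R) * 1000 + 129%:R)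 * 1000 + 53%:R) * 1000 + 976%:R) * 1000 + 410%:R) * 1000 + 98%:R) * 1000 + 206%:R) * 1000 + 584%:R) * 1000 + 681%:R) * 1000 + 233%:R) * 1000 + 454%:R) * 1000 + 856%:R) * 1000 + 723%:R) * 1000 + 497%:R) * 1000 + 81%:R) * 1000 + 488%:R) * 1000 + 844%:R) * 1000 + 525%:R) * 1000 + 211%:R) * 1000 + 904%:R) * 1000 + 149%:R) * 1000 + 792%:R) * 1000 + 668%:R) * w^+33) * Qexpr (- w^+2) = (((((((((((((((((((((((512 * 1000 + 238%:R) * 1000 + 374%:R) * 1000 + 900%:R) * 1000 + 179%:R) * 1000 + 282%:R) * 1000 + 959%:R) * 1000 + 829%:R) * 1000 + 203%:R) * 1000 + 304%:R) * 1000 + 150%:R) * 1000 + 210%:R) * 1000 + 580%:R) * 1000 + 736%:R) * 1000 + 271%:R) * 1000 + 225%:R) * 1000 + 631%:R) * 1000 + 415%:R) * 1000 + 64%:R) * 1000 + 52%:R) * 1000 + 778%:R) * 1000 + 747%:R) * 1000 + 999%:R) * 1000 + 628%:R).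
Proof. rewrite /Qexpr. ring. Qed.

Lemma hornerQ (x : algC) : (pZtoC Qpoly).[x] = Qexpr x.
Proof.
rewrite /Qpoly sumE !big_cons big_nil /= /Qexpr; ring.
Qed.

Lemma cert_contra {a b A B N : algC} : a = 0 -> b = 0 -> A * a + B * b = N -> 0 < N -> False.
Proof. move=> -> -> <-; by rewrite !mulr0 addr0 Order.POrderTheory.ltxx. Qed.

Theorem mainTheorem6 (t b : nat) :
  (0 < b)%N -> 'Phi_b %| Rpoly t -> ~~ (4 %| b)%N.
Proof.
move=> b0 hd; apply/negP => /dvdnP [c Hb].
have c0 : (0 < c)%N by move: b0; rewrite Hb muln_gt0 => /andP[].
have [z pz] := C_prim_root_exists b0.
have Hb2 : b = (c * 2 * 2)%N by rewrite Hb -mulnA.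
have z0 : z != 0 by rewrite (prim_root_eq0 pz) -lt0n.
have zc : z ^+ (c*2) = -1.
  have : (z ^+ (c*2)) ^+ 2 == 1 by rewrite -exprM -Hb2 prim_expr_order.
  rewrite sqrf_eq1 => /orP [|/eqP //].
  rewrite -(prim_order_dvd pz) Hb2 => /dvdn_leq.
  rewrite muln_gt0 c0 /= => /(_ isT) H; exfalso; lia.
have pnz : b.-primitive_root (- z).
  have -> : - z = z ^+ (c*2 + 1) by rewrite exprD zc expr1 mulN1r.
  rewrite prim_root_exp_coprime // Hb2 coprimeMr; apply/andP; split.
    by rewrite addn1 coprimeSn.
  by rewrite coprimen2 oddD oddM andbF.
have pzi : b.-primitive_root z^-1 := prim_inv _ _ pz.
have pnzi : b.-primitive_root (- z^-1) by rewrite -invrN; apply: prim_inv.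
have E1 := evenE _ _ _ hd pz pnz.
have E2 := evenE _ _ _ hd pzi pnzi.
rewrite !exprVn in E2.
set w := z ^+ 2 in E1 E2; set u := w ^+ t in E1 E2.
have w0 : w != 0 by rewrite expf_neq0.
have u0 : u != 0 by rewrite expf_neq0.
have G1 : G0 u w = 0.
  have -> : G0 u w = u^+4 * w^+7 * E0 u^-1 w^-1 by rewrite /G0 /E0; field; rewrite w0 u0.
  by rewrite E2 mulr0.
have Q1 : Qexpr w = 0.
  have := res_cert u w; rewrite E1 G1 !mulr0 addr0 => /esym/eqP.
  rewrite mulf_eq0 mulf_eq0 !expf_eq0 /= (negbTE z0) /= subr_eq0 => /orP [Hw1|/eqP //].
  exfalso; move: Hw1; rewrite /w -(prim_order_dvd pz) Hb => /dvdn_leq H.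
  have := H isT; lia.
have pw : (c*2).-primitive_root w.
  have := exp_prim_root pz 2; rewrite Hb2 gcdnMl mulnK //.
have wc : w ^+ c = -1 by rewrite /w -exprM mulnC zc.
have hQ : root (pZtoC Qpoly) w by rewrite /root hornerQ Q1.
case/orP: (orbN (odd c)) => oc.
- have : root (pZtoC Qpoly) (w ^+ (c + 2)).
    apply: (conj_root _ _ _ _ pw) => //.
    rewrite coprimeMr; apply/andP; split.
      by rewrite coprime_sym /coprime gcdnDl -/(coprime c 2) coprimen2.
    by rewrite coprimen2 oddD oc.
  rewrite exprD wc /root hornerQ mulN1r => /eqP Q2.
  apply: (cert_contra Q1 Q2 (cert2 w)).
  repeat apply: pos_step; by rewrite ltr0n.
- have : root (pZtoC Qpoly) (w ^+ (c + 1)).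
    apply: (conj_root _ _ _ _ pw) => //.
    rewrite coprimeMr; apply/andP; split.
      by rewrite addn1 coprimeSn.
    by rewrite coprimen2 addn1 /= oc.
  rewrite exprD wc expr1 /root hornerQ mulN1r => /eqP Q2.
  apply: (cert_contra Q1 Q2 (cert1 w)).
  repeat apply: pos_step; by rewrite ltr0n.
Qed.
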